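(* Let $\mathcal{LS}_{\mathfrak{B}_1}\langle X\rangle$ be the free algebra over a field of characteristic $0$ in the variety of left-symmetric algebras satisfying $(ab)c-(ba)c-(ac)b+(ca)b+(bc)a-(cb)a=0$, and equip it with the anticommutator $\{a,b\}=ab+ba$. Then every polynomial identity of degree at most $4$ satisfied by $(\mathcal{LS}_{\mathfrak{B}_1}\langle X\rangle,\{\cdot,\cdot\})$ is a consequence of commutativity.
   Context: A left-symmetric algebra is an algebra with $(a,b,c)=(b,a,c)$, where $(a,b,c)=(ab)c-a(bc)$. *)

(* Defs.v *)
From HB Require Import structures.
From mathcomp Require Import all_boot all_algebra.
Set Implicit Arguments. Unset Strict Implicit. Unset Printing Implicit Defensive.
Import GRing.Theory.
Local Open Scope ring_scope.

Inductive term : Type := Var of nat | Mul of term & term.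

Fixpoint term_eqb (s t : term) : bool :=
  match s, t with
  | Var m, Var n => m == n
  | Mul s1 s2, Mul t1 t2 => term_eqb s1 t1 && term_eqb s2 t2
  | _, _ => false
  end.

Lemma term_eqP : Equality.axiom term_eqb.
Proof.
elim=> [m|s1 IH1 s2 IH2] [n|t1 t2] /=; try by constructor.
- by apply: (iffP eqP) => [->|[]].
- by apply: (iffP andP) => [[/IH1 -> /IH2 ->]|[<- <-]]; split; [apply/IH1|apply/IH2].
Qed.
HB.instance Definition _ := hasDecEq.Build term term_eqP.

Fixpoint deg (t : term) : nat :=
  match t with Var _ => 1 | Mul s u => deg s + deg u end.

Section FreeNA.
Variable K : fieldType.

(* an element of the free nonassociative algebra K{X}, X = {x_0, x_1, ...},
   represented as a finite formal linear combination of monomials *)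
Definition napoly := seq (K * term).

Definition coef (f : napoly) (t : term) : K := \sum_(p <- f | p.2 == t) p.1.
(* equality in the free nonassociative algebra *)
Definition peq (f g : napoly) : Prop := forall t, coef f t = coef g t.

Definition padd (f g : napoly) : napoly := f ++ g.
Definition pscale (c : K) (f : napoly) : napoly := [seq (c * p.1, p.2) | p <- f].
Definition pmul (f g : napoly) : napoly :=
  [seq (p.1 * q.1, Mul p.2 q.2) | p <- f, q <- g].
Definition pvar (n : nat) : napoly := [:: (1, Var n)].

Fixpoint msubst (sigma : nat -> napoly) (t : term) : napoly :=
  match t with
  | Var n => sigma n
  | Mul s u => pmul (msubst sigma s) (msubst sigma u)
  end.
Definition psubst (sigma : nat -> napoly) (f : napoly) : napoly :=
  flatten [seq pscale p.1 (msubst sigma p.2) | p <- f].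

Inductive Tideal (gens : seq napoly) : napoly -> Prop :=
  | T_gen g : g \in gens -> Tideal gens g
  | T_zero : Tideal gens [::]
  | T_eq f g : Tideal gens f -> peq f g -> Tideal gens g
  | T_add f g : Tideal gens f -> Tideal gens g -> Tideal gens (padd f g)
  | T_scale c f : Tideal gens f -> Tideal gens (pscale c f)
  | T_mull h f : Tideal gens f -> Tideal gens (pmul h f)
  | T_mulr h f : Tideal gens f -> Tideal gens (pmul f h)
  | T_subst sigma f : Tideal gens f -> Tideal gens (psubst sigma f).

Definition x0 := Var 0. Definition x1 := Var 1. Definition x2 := Var 2.

Definition comm_id : napoly := [:: (1, Mul x0 x1); (-1, Mul x1 x0)].

(* left-symmetry: (a,b,c) - (b,a,c) with (a,b,c) = (ab)c - a(bc) *)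
Definition lsym_id : napoly :=
  [:: (1, Mul (Mul x0 x1) x2); (-1, Mul x0 (Mul x1 x2));
      (-1, Mul (Mul x1 x0) x2); (1, Mul x1 (Mul x0 x2))].

Definition B1_id : napoly :=
  [:: (1, Mul (Mul x0 x1) x2); (-1, Mul (Mul x1 x0) x2);
      (-1, Mul (Mul x0 x2) x1); (1, Mul (Mul x2 x0) x1);
      (1, Mul (Mul x1 x2) x0); (-1, Mul (Mul x2 x1) x0)].

(* The free algebra LS_B1<X> is K{X} / Tideal [:: lsym_id; B1_id].
   Evaluation of a nonassociative polynomial f in the anticommutator
   {a,b} = ab + ba, computed on representatives in K{X}. *)
Definition panti (f g : napoly) : napoly := padd (pmul f g) (pmul g f).
Fixpoint meval_anti (v : nat -> napoly) (t : term) : napoly :=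
  match t with
  | Var n => v n
  | Mul s u => panti (meval_anti v s) (meval_anti v u)
  end.
Definition peval_anti (v : nat -> napoly) (f : napoly) : napoly :=
  flatten [seq pscale p.1 (meval_anti v p.2) | p <- f].

Definition is_identity_LSB1_anti (f : napoly) : Prop :=
  forall v : nat -> napoly, Tideal [:: lsym_id; B1_id] (peval_anti v f).

Definition conseq_comm (f : napoly) : Prop := Tideal [:: comm_id] f.

End FreeNA.

(* Main.v *)
Require Import Defs.
From Stdlib Require Import ZArith NArith Lia.
From HB Require Import structures.
From mathcomp Require Import all_boot all_algebra.
From mathcomp.zify Require Import ssrZ.
From mathcomp Require Import ring.
Import GRing.Theory.
Set Implicit Arguments. Unset Strict Implicit. Unset Printing Implicit Defensive.
Delimit Scope Z_scope with Z.
From mathcomp Require Import zify.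
Inductive bt (A : Type) := BLeaf | BNode of bt A & A & bt A.
Arguments BLeaf {A}.
Fixpoint bget {A : Type} (t : bt A) (p : positive) : option A :=
  match t with
  | BLeaf => None
  | BNode l x r => match p with xH => Some x | xO q => bget l q | xI q => bget r q end
  end.
Definition zv := seq (N * Z).
Definition nB : nat := 93.
Definition Ttrie : bt (bt zv) :=
(BNode (BNode (BNode (BNode (BNode (BNode (BNode BLeaf BLeaf BLeaf) (BNode BLeaf [::] (BNode BLeaf [::(Npos 82%positive, 1%Z); (Npos 64%positive, (-1)%Z); (Npos 79%positive, 1%Z)] BLeaf)) BLeaf) (BNode (BNode BLeaf [::(Npos 47%positive, 1%Z); (Npos 40%positive, 1%Z); (Npos 42%positive, (-1)%Z); (Npos 41%positive, (-1)%Z); (Npos 44%positive, 1%Z)] (BNode BLeaf [::(Npos 68%positive, 1%Z); (Npos 65%positive, (-1)%Z); (Npos 80%positive, 1%Z); (Npos 54%positive, (-1)%Z); (Npos 49%positive, 2%Z); (Npos 52%positive, (-2)%Z); (Npos 58%positive, 1%Z); (Npos 59%positive, (-2)%Z); (Npos 61%positive, 1%Z); (Npos 55%positive, (-1)%Z); (Npos 56%positive, 1%Z); (Npos 60%positive, (-1)%Z); (Npos 51%positive, 1%Z); (Npos 62%positive, 1%Z)] BLeaf)) [::(Npos 39%positive, 1%Z); (Npos 32%positive, 1%Z); (Npos 34%positive, (-1)%Z); (Npos 33%positive, (-1)%Z); (Npos 36%positive, 1%Z)] (BNode (BNode BLeaf [::(Npos 80%positive, 1%Z); (Npos 53%positive,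 (-1)%Z); (Npos 58%positive, 1%Z); (Npos 59%positive, (-2)%Z); (Npos 52%positive, (-1)%Z); (Npos 61%positive, 1%Z); (Npos 56%positive, 1%Z); (Npos 60%positive, (-1)%Z); (Npos 51%positive, 1%Z); (Npos 48%positive, 1%Z); (Npos 57%positive, (-1)%Z); (Npos 54%positive, 1%Z); (Npos 50%positive, (-1)%Z); (Npos 62%positive, 1%Z)] BLeaf) [::] BLeaf)) (BNode (BNode BLeaf BLeaf BLeaf) (BNode BLeaf [::(Npos 89%positive, 1%Z); (Npos 48%positive, 1%Z); (Npos 53%positive, (-1)%Z); (Npos 65%positive, (-1)%Z); (Npos 80%positive, 1%Z)] BLeaf) BLeaf)) (BNode (BNode (BNode BLeaf [::(Npos 37%positive, 1%Z); (Npos 32%positive, (-1)%Z); (Npos 34%positive, 1%Z)] BLeaf) [::(Npos 22%positive, 1%Z); (Npos 17%positive, (-1)%Z); (Npos 20%positive, 1%Z)] (BNode BLeaf [::] (BNode BLeaf [::(Npos 51%positive, (-1)%Z); (Npos 59%positive, 1%Z); (Npos 73%positive, 1%Z); (Npos 66%positive, (-1)%Z); (Npos 76%positive, 1%Z); (Npos 49%positive, (-1)%Z); (Npos 54%positive, 1%Z); (Npos 62%positive, (-1)%Z); (Npos 52%positive, 1%Z)] BLeaf))) [::] (BNode (BNode BLeaf [::] (BNode BLeaf [::(Npos 76%positive, 1%Z); (Npos 50%positive, (-1)%Z); (Npos 58%positive, 1%Z)] BLeaf)) [::] BLeaf)) (BNode (BNode (BNode BLeaf BLeaf BLeaf) (BNode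 (BNode BLeaf [::(Npos 84%positive, 1%Z); (Npos 65%positive, (-1)%Z); (Npos 80%positive, 1%Z)] BLeaf) [::] BLeaf) BLeaf) (BNode (BNode (BNode BLeaf [::(Npos 81%positive, 1%Z); (Npos 63%positive, (-1)%Z); (Npos 78%positive, 1%Z)] BLeaf) [::] BLeaf) [::] BLeaf) (BNode (BNode BLeaf BLeaf BLeaf) BLeaf BLeaf))) (BNode (BNode (BNode (BNode BLeaf [::(Npos 35%positive, 1%Z); (Npos 32%positive, 1%Z); (Npos 34%positive, (-1)%Z); (Npos 33%positive, (-1)%Z); (Npos 36%positive, 1%Z)] (BNode BLeaf [::(Npos 74%positive, 1%Z)] BLeaf)) [::] (BNode (BNode BLeaf [::(Npos 53%positive, 2%Z); (Npos 54%positive, (-2)%Z); (Npos 58%positive, 1%Z); (Npos 49%positive, 2%Z); (Npos 59%positive, (-2)%Z); (Npos 57%positive, 1%Z); (Npos 52%positive, (-2)%Z); (Npos 61%positive, 1%Z); (Npos 55%positive, (-2)%Z); (Npos 56%positive, 1%Z); (Npos 51%positive, 1%Z); (Npos 62%positive, 1%Z); (Npos 48%positive, (-1)%Z)] BLeaf) [::(Npos 43%positive, 1%Z); (Npos 40%positive, 1%Z); (Npos 42%positive, (-1)%Z); (Npos 41%positive, (-1)%Z); (Npos 44%positive, 1%Z)] BLeaf)) [::(Npos 13%positive, 1%Z)] (BNode (BNode (BNode BLeaf [::(Npos 59%positive, (-1)%Z); (Npos 61%positive, 1%Z); (Npos 56%positive, 1%Z); (Npos 60%positive, (-1)%Z);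 (Npos 51%positive, 1%Z); (Npos 48%positive, 2%Z); (Npos 49%positive, (-1)%Z); (Npos 57%positive, (-1)%Z); (Npos 54%positive, 1%Z); (Npos 50%positive, (-2)%Z); (Npos 62%positive, 1%Z); (Npos 53%positive, (-1)%Z); (Npos 58%positive, 1%Z)] BLeaf) [::] BLeaf) [::(Npos 27%positive, 1%Z); (Npos 24%positive, 1%Z); (Npos 26%positive, (-1)%Z); (Npos 25%positive, (-1)%Z); (Npos 28%positive, 1%Z)] (BNode (BNode BLeaf [::(Npos 72%positive, 1%Z)] BLeaf) [::] BLeaf))) [::(Npos 9%positive, 1%Z)] (BNode (BNode (BNode (BNode BLeaf [::(Npos 62%positive, 1%Z)] BLeaf) [::] BLeaf) [::(Npos 28%positive, 1%Z)] (BNode (BNode BLeaf [::(Npos 53%positive, (-1)%Z); (Npos 61%positive, 2%Z); (Npos 58%positive, 1%Z); (Npos 59%positive, (-2)%Z); (Npos 52%positive, (-1)%Z); (Npos 56%positive, 1%Z); (Npos 60%positive, (-1)%Z); (Npos 51%positive, 1%Z); (Npos 48%positive, 1%Z); (Npos 57%positive, (-1)%Z); (Npos 54%positive, 1%Z); (Npos 50%positive, (-1)%Z); (Npos 62%positive, 1%Z)] BLeaf) [::] BLeaf)) [::(Npos 15%positive, 1%Z)] (BNode (BNode (BNode BLeaf [::(Npos 49%positive, 1%Z); (Npos 57%positive, 1%Z); (Npos 54%positive, (-1)%Z); (Npos 62%positive, 1%Z); (Npos 52%positive, (-1)%Z)] BLeaf) [::(Npos 44%positive, 1%Z)] BLeaf)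 [::(Npos 36%positive, 1%Z)] (BNode (BNode BLeaf [::(Npos 73%positive, 1%Z)] BLeaf) [::] BLeaf)))) (BNode (BNode (BNode (BNode BLeaf BLeaf BLeaf) (BNode (BNode BLeaf [::(Npos 91%positive, 2%Z); (Npos 49%positive, 1%Z); (Npos 84%positive, (-2)%Z); (Npos 86%positive, 1%Z); (Npos 59%positive, (-2)%Z); (Npos 52%positive, (-1)%Z); (Npos 61%positive, 1%Z); (Npos 51%positive, 1%Z); (Npos 48%positive, (-1)%Z); (Npos 50%positive, 1%Z)] BLeaf) [::] BLeaf) BLeaf) (BNode (BNode (BNode BLeaf [::(Npos 81%positive, (-2)%Z); (Npos 83%positive, 1%Z); (Npos 48%positive, 2%Z); (Npos 50%positive, (-1)%Z); (Npos 53%positive, (-2)%Z); (Npos 87%positive, 2%Z); (Npos 55%positive, 1%Z)] BLeaf) [::] BLeaf) [::] BLeaf) (BNode (BNode BLeaf BLeaf BLeaf) BLeaf BLeaf)) (BNode (BNode (BNode BLeaf [::(Npos 45%positive, 1%Z); (Npos 40%positive, (-1)%Z); (Npos 42%positive, 1%Z)] BLeaf) [::] (BNode (BNode BLeaf [::(Npos 56%positive, (-1)%Z); (Npos 60%positive, 1%Z); (Npos 74%positive, 1%Z); (Npos 52%positive, 1%Z); (Npos 62%positive, (-1)%Z); (Npos 63%positive, (-1)%Z); (Npos 78%positive, 1%Z)] BLeaf) [::] BLeaf)) [::(Npos 23%positive, 1%Z); (Npos 16%positive, 1%Z); (Npos 18%positive, (-1)%Z); (Npos 17%positive, (-1)%Z);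 (Npos 20%positive, 1%Z)] (BNode (BNode (BNode BLeaf [::(Npos 78%positive, 1%Z); (Npos 53%positive, (-1)%Z); (Npos 58%positive, 1%Z); (Npos 48%positive, 1%Z); (Npos 50%positive, (-1)%Z)] BLeaf) [::] BLeaf) [::] BLeaf)) (BNode (BNode (BNode BLeaf BLeaf BLeaf) (BNode BLeaf [::(Npos 89%positive, (-2)%Z); (Npos 48%positive, (-1)%Z); (Npos 90%positive, 1%Z); (Npos 50%positive, 1%Z); (Npos 92%positive, 2%Z); (Npos 59%positive, (-1)%Z); (Npos 61%positive, 1%Z); (Npos 56%positive, 1%Z); (Npos 60%positive, (-1)%Z); (Npos 57%positive, (-1)%Z); (Npos 54%positive, 1%Z)] BLeaf) BLeaf) (BNode BLeaf [::] (BNode BLeaf [::(Npos 82%positive, (-2)%Z); (Npos 88%positive, 2%Z); (Npos 85%positive, 1%Z); (Npos 49%positive, 2%Z); (Npos 52%positive, (-1)%Z); (Npos 54%positive, (-2)%Z); (Npos 57%positive, 1%Z)] BLeaf)) (BNode (BNode BLeaf BLeaf BLeaf) BLeaf BLeaf)))) (BNode (BNode (BNode (BNode (BNode BLeaf [::(Npos 41%positive, 1%Z)] BLeaf) [::(Npos 19%positive, 1%Z)] (BNode (BNode BLeaf [::(Npos 68%positive, 1%Z)] BLeaf) [::] BLeaf)) [::(Npos 12%positive, 1%Z)] (BNode (BNode (BNode BLeaf [::(Npos 56%positive, 1%Z)] BLeaf) [::] BLeaf) [::] BLeaf)) [::] (BNode (BNode (BNode (BNode BLeaf [::(Npos 54%positive,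 1%Z)] BLeaf) [::] BLeaf) [::(Npos 27%positive, 1%Z)] BLeaf) [::] (BNode (BNode (BNode BLeaf [::(Npos 66%positive, 1%Z)] BLeaf) [::] BLeaf) [::] BLeaf))) [::(Npos 5%positive, 1%Z)] (BNode (BNode (BNode (BNode (BNode BLeaf [::(Npos 53%positive, 1%Z)] BLeaf) [::] BLeaf) [::(Npos 26%positive, 1%Z)] BLeaf) [::] (BNode (BNode (BNode BLeaf [::(Npos 57%positive, 1%Z)] BLeaf) [::] BLeaf) [::] BLeaf)) [::(Npos 10%positive, 1%Z)] (BNode (BNode (BNode (BNode BLeaf [::(Npos 55%positive, 1%Z)] BLeaf) [::] BLeaf) [::] BLeaf) [::(Npos 18%positive, 1%Z)] (BNode (BNode (BNode BLeaf [::(Npos 67%positive, 1%Z)] BLeaf) [::] BLeaf) [::(Npos 40%positive, 1%Z)] BLeaf)))) (BNode (BNode (BNode (BNode (BNode BLeaf BLeaf BLeaf) (BNode (BNode BLeaf [::(Npos 86%positive, 1%Z)] BLeaf) [::] BLeaf) BLeaf) (BNode (BNode (BNode BLeaf [::(Npos 83%positive, 1%Z)] BLeaf) [::] BLeaf) [::] BLeaf) (BNode (BNode BLeaf BLeaf BLeaf) BLeaf BLeaf)) (BNode (BNode (BNode BLeaf [::] (BNode BLeaf [::(Npos 70%positive, 1%Z); (Npos 67%positive, (-1)%Z); (Npos 77%positive, 1%Z); (Npos 52%positive, (-1)%Z); (Npos 59%positive, (-1)%Z); (Npos 61%positive, 1%Z); (Npos 56%positive, 1%Z); (Npos 60%positive,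 (-1)%Z); (Npos 57%positive, (-1)%Z); (Npos 54%positive, 1%Z); (Npos 62%positive, 1%Z)] BLeaf)) [::(Npos 30%positive, 1%Z); (Npos 25%positive, (-1)%Z); (Npos 28%positive, 1%Z)] BLeaf) [::] (BNode BLeaf [::(Npos 38%positive, 1%Z); (Npos 33%positive, (-1)%Z); (Npos 36%positive, 1%Z)] (BNode (BNode BLeaf [::(Npos 77%positive, 1%Z); (Npos 52%positive, (-1)%Z); (Npos 62%positive, 1%Z)] BLeaf) [::] BLeaf))) (BNode (BNode (BNode BLeaf BLeaf BLeaf) (BNode BLeaf [::(Npos 90%positive, 1%Z)] BLeaf) BLeaf) (BNode BLeaf [::] (BNode BLeaf [::(Npos 85%positive, 1%Z)] BLeaf)) (BNode (BNode BLeaf BLeaf BLeaf) BLeaf BLeaf))) (BNode (BNode (BNode (BNode (BNode BLeaf [::(Npos 49%positive, (-1)%Z); (Npos 72%positive, 1%Z); (Npos 69%positive, (-1)%Z); (Npos 75%positive, 1%Z); (Npos 53%positive, 1%Z); (Npos 58%positive, (-1)%Z); (Npos 59%positive, 2%Z); (Npos 52%positive, 1%Z); (Npos 61%positive, (-1)%Z); (Npos 56%positive, (-1)%Z); (Npos 60%positive, 1%Z); (Npos 51%positive, (-1)%Z); (Npos 48%positive, (-1)%Z); (Npos 57%positive, 1%Z); (Npos 50%positive, 1%Z); (Npos 62%positive, (-1)%Z)] BLeaf) [::] BLeaf) [::(Npos 29%positive, 1%Z); (Npos 24%positive, (-1)%Z); (Npos 26%positive, 1%Z)] BLeaf) [::]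 BLeaf) [::] (BNode BLeaf [::(Npos 21%positive, 1%Z); (Npos 16%positive, (-1)%Z); (Npos 18%positive, 1%Z)] (BNode BLeaf [::] (BNode BLeaf [::(Npos 75%positive, 1%Z); (Npos 48%positive, (-1)%Z); (Npos 53%positive, 1%Z)] BLeaf)))) (BNode (BNode (BNode (BNode BLeaf BLeaf BLeaf) (BNode (BNode BLeaf [::(Npos 66%positive, (-1)%Z); (Npos 76%positive, 1%Z); (Npos 86%positive, 2%Z); (Npos 91%positive, 1%Z); (Npos 52%positive, (-1)%Z); (Npos 58%positive, 1%Z); (Npos 59%positive, (-2)%Z); (Npos 53%positive, (-1)%Z); (Npos 84%positive, (-2)%Z); (Npos 54%positive, 2%Z); (Npos 61%positive, 1%Z); (Npos 56%positive, 1%Z); (Npos 60%positive, (-1)%Z); (Npos 51%positive, 1%Z); (Npos 57%positive, (-1)%Z)] BLeaf) [::] BLeaf) BLeaf) (BNode (BNode (BNode BLeaf [::(Npos 69%positive, (-1)%Z); (Npos 75%positive, 1%Z); (Npos 83%positive, 2%Z); (Npos 87%positive, 1%Z); (Npos 50%positive, (-2)%Z); (Npos 58%positive, 1%Z); (Npos 53%positive, (-1)%Z); (Npos 81%positive, (-2)%Z); (Npos 48%positive, 2%Z)] BLeaf) [::] BLeaf) [::] BLeaf) (BNode (BNode BLeaf BLeaf BLeaf) BLeaf BLeaf)) (BNode (BNode (BNode (BNode BLeaf [::(Npos 71%positive, 1%Z); (Npos 64%positive, (-1)%Z); (Npos 79%positive, 1%Z); (Npos 49%positive, 2%Z); (Npos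 59%positive, (-2)%Z); (Npos 54%positive, (-1)%Z); (Npos 52%positive, (-2)%Z); (Npos 61%positive, 1%Z); (Npos 51%positive, 1%Z); (Npos 62%positive, 1%Z); (Npos 55%positive, (-1)%Z); (Npos 53%positive, 1%Z); (Npos 48%positive, (-1)%Z); (Npos 50%positive, 1%Z)] BLeaf) [::] BLeaf) [::] BLeaf) [::(Npos 31%positive, 1%Z); (Npos 24%positive, 1%Z); (Npos 26%positive, (-1)%Z); (Npos 25%positive, (-1)%Z); (Npos 28%positive, 1%Z)] (BNode BLeaf [::(Npos 46%positive, 1%Z); (Npos 41%positive, (-1)%Z); (Npos 44%positive, 1%Z)] (BNode BLeaf [::(Npos 79%positive, 1%Z); (Npos 49%positive, 1%Z); (Npos 54%positive, (-1)%Z); (Npos 62%positive, 1%Z); (Npos 52%positive, (-1)%Z)] BLeaf))) (BNode (BNode (BNode BLeaf BLeaf BLeaf) (BNode BLeaf [::(Npos 63%positive, (-1)%Z); (Npos 78%positive, 1%Z); (Npos 90%positive, 2%Z); (Npos 92%positive, 1%Z); (Npos 89%positive, (-2)%Z); (Npos 48%positive, (-1)%Z); (Npos 49%positive, 2%Z); (Npos 58%positive, 1%Z); (Npos 59%positive, (-2)%Z); (Npos 52%positive, (-1)%Z); (Npos 61%positive, 1%Z); (Npos 56%positive, 1%Z); (Npos 60%positive, (-1)%Z); (Npos 51%positive, 1%Z); (Npos 57%positive, (-1)%Z)] BLeaf) BLeaf) (BNode BLeaf [::] (BNode BLeaf [::(Npos 69%positive, (-1)%Z); (Npos 75%positive,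 1%Z); (Npos 53%positive, 1%Z); (Npos 58%positive, (-1)%Z); (Npos 59%positive, 2%Z); (Npos 52%positive, (-1)%Z); (Npos 61%positive, (-1)%Z); (Npos 56%positive, (-1)%Z); (Npos 60%positive, 1%Z); (Npos 51%positive, (-1)%Z); (Npos 48%positive, (-1)%Z); (Npos 57%positive, 1%Z); (Npos 54%positive, (-2)%Z); (Npos 50%positive, 1%Z); (Npos 85%positive, 2%Z); (Npos 88%positive, 1%Z); (Npos 82%positive, (-2)%Z); (Npos 49%positive, 2%Z)] BLeaf)) (BNode BLeaf BLeaf BLeaf))))) (BNode (BNode (BNode (BNode (BNode BLeaf [::(Npos 33%positive, 1%Z)] (BNode BLeaf [::(Npos 65%positive, 1%Z)] BLeaf)) [::] BLeaf) [::(Npos 8%positive, 1%Z)] (BNode BLeaf [::(Npos 17%positive, 1%Z)] (BNode (BNode BLeaf [::(Npos 51%positive, 1%Z)] BLeaf) [::] BLeaf))) [::(Npos 4%positive, 1%Z)] (BNode (BNode BLeaf [::] (BNode (BNode BLeaf [::(Npos 49%positive, 1%Z)] BLeaf) [::] BLeaf)) [::] (BNode BLeaf [::(Npos 25%positive, 1%Z)] (BNode (BNode BLeaf [::(Npos 63%positive, 1%Z)] BLeaf) [::] BLeaf)))) [::] (BNode (BNode (BNode BLeaf [::] (BNode (BNode BLeaf [::(Npos 48%positive, 1%Z)] BLeaf) [::] BLeaf)) [::] (BNode BLeaf [::(Npos 24%positive, 1%Z)] (BNode (BNode BLeaf [::(Npos 52%positive, 1%Z)] BLeaf) [::] BLeaf)))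 [::(Npos 6%positive, 1%Z)] (BNode (BNode BLeaf [::(Npos 16%positive, 1%Z)] (BNode (BNode BLeaf [::(Npos 50%positive, 1%Z)] BLeaf) [::] BLeaf)) [::] (BNode BLeaf [::(Npos 32%positive, 1%Z)] (BNode (BNode BLeaf [::(Npos 64%positive, 1%Z)] BLeaf) [::] BLeaf))))) (BNode (BNode (BNode (BNode (BNode (BNode BLeaf BLeaf BLeaf) (BNode (BNode BLeaf [::(Npos 84%positive, 1%Z)] BLeaf) [::] BLeaf) BLeaf) (BNode (BNode (BNode BLeaf [::(Npos 81%positive, 1%Z)] BLeaf) [::] BLeaf) [::] BLeaf) (BNode (BNode BLeaf BLeaf BLeaf) BLeaf BLeaf)) (BNode (BNode (BNode BLeaf [::] (BNode BLeaf [::(Npos 70%positive, 1%Z); (Npos 67%positive, (-1)%Z); (Npos 77%positive, 1%Z); (Npos 53%positive, 1%Z); (Npos 58%positive, (-1)%Z); (Npos 48%positive, (-1)%Z); (Npos 50%positive, 1%Z)] BLeaf)) [::(Npos 30%positive, 1%Z)] BLeaf) [::] (BNode BLeaf [::(Npos 38%positive, 1%Z)] (BNode (BNode BLeaf [::(Npos 77%positive, 1%Z)] BLeaf) [::] BLeaf))) (BNode (BNode (BNode BLeaf BLeaf BLeaf) (BNode BLeaf [::(Npos 89%positive, 1%Z)] BLeaf) BLeaf) (BNode BLeaf [::] (BNode BLeaf [::(Npos 82%positive, 1%Z)] BLeaf)) (BNode (BNode BLeaf BLeaf BLeaf) BLeaf BLeaf))) (BNode (BNode (BNode (BNode (BNode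 BLeaf [::(Npos 72%positive, 1%Z); (Npos 69%positive, (-1)%Z); (Npos 75%positive, 1%Z); (Npos 53%positive, 1%Z); (Npos 58%positive, (-1)%Z); (Npos 59%positive, 2%Z); (Npos 52%positive, 1%Z); (Npos 61%positive, (-1)%Z); (Npos 56%positive, (-1)%Z); (Npos 60%positive, 1%Z); (Npos 51%positive, (-1)%Z); (Npos 48%positive, (-1)%Z); (Npos 57%positive, 1%Z); (Npos 54%positive, (-1)%Z); (Npos 50%positive, 1%Z); (Npos 62%positive, (-1)%Z)] BLeaf) [::] BLeaf) [::(Npos 29%positive, 1%Z)] BLeaf) [::] BLeaf) [::] (BNode BLeaf [::(Npos 21%positive, 1%Z)] (BNode BLeaf [::] (BNode BLeaf [::(Npos 75%positive, 1%Z)] BLeaf)))) (BNode (BNode (BNode (BNode BLeaf BLeaf BLeaf) (BNode (BNode BLeaf [::(Npos 86%positive, 2%Z); (Npos 91%positive, 1%Z); (Npos 52%positive, (-2)%Z); (Npos 49%positive, 1%Z); (Npos 58%positive, 1%Z); (Npos 59%positive, (-2)%Z); (Npos 53%positive, (-1)%Z); (Npos 84%positive, (-2)%Z); (Npos 61%positive, 1%Z); (Npos 56%positive, 1%Z); (Npos 60%positive, (-1)%Z); (Npos 51%positive, 1%Z); (Npos 57%positive, (-1)%Z); (Npos 54%positive, 1%Z); (Npos 62%positive, 1%Z)] BLeaf) [::] BLeaf) BLeaf) (BNode (BNode (BNode BLeaf [::(Npos 83%positive, 2%Z); (Npos 87%positive, 1%Z); (Npos 50%positive, (-2)%Z); (Npos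 58%positive, 1%Z); (Npos 53%positive, (-1)%Z); (Npos 81%positive, (-2)%Z); (Npos 48%positive, 2%Z)] BLeaf) [::] BLeaf) [::] BLeaf) (BNode (BNode BLeaf BLeaf BLeaf) BLeaf BLeaf)) (BNode (BNode (BNode (BNode BLeaf [::(Npos 71%positive, 1%Z); (Npos 50%positive, 1%Z); (Npos 58%positive, (-1)%Z); (Npos 64%positive, (-1)%Z); (Npos 79%positive, 1%Z)] BLeaf) [::] BLeaf) [::] BLeaf) [::(Npos 31%positive, 1%Z)] (BNode BLeaf [::(Npos 46%positive, 1%Z)] (BNode BLeaf [::(Npos 79%positive, 1%Z)] BLeaf))) (BNode (BNode (BNode BLeaf BLeaf BLeaf) (BNode BLeaf [::(Npos 90%positive, 2%Z); (Npos 92%positive, 1%Z); (Npos 89%positive, (-2)%Z); (Npos 48%positive, (-1)%Z); (Npos 49%positive, 2%Z); (Npos 52%positive, (-2)%Z); (Npos 58%positive, 1%Z); (Npos 59%positive, (-2)%Z); (Npos 61%positive, 1%Z); (Npos 56%positive, 1%Z); (Npos 60%positive, (-1)%Z); (Npos 51%positive, 1%Z); (Npos 57%positive, (-1)%Z); (Npos 62%positive, 1%Z)] BLeaf) BLeaf) (BNode BLeaf [::] (BNode BLeaf [::(Npos 85%positive, 2%Z); (Npos 88%positive, 1%Z); (Npos 52%positive, (-2)%Z); (Npos 54%positive, (-1)%Z); (Npos 62%positive, 1%Z); (Npos 82%positive, (-2)%Z); (Npos 49%positive, 2%Z)] BLeaf)) (BNode (BNode BLeaf BLeaf BLeaf)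 BLeaf BLeaf)))) (BNode (BNode (BNode (BNode (BNode (BNode BLeaf [::(Npos 71%positive, 1%Z)] BLeaf) [::] BLeaf) [::] BLeaf) [::(Npos 14%positive, 1%Z)] (BNode BLeaf [::] (BNode BLeaf [::(Npos 60%positive, 1%Z)] BLeaf))) [::(Npos 11%positive, 1%Z)] (BNode (BNode BLeaf [::(Npos 35%positive, 1%Z)] (BNode BLeaf [::(Npos 59%positive, 1%Z)] BLeaf)) [::(Npos 19%positive, 1%Z); (Npos 16%positive, 1%Z); (Npos 18%positive, (-1)%Z); (Npos 17%positive, (-1)%Z); (Npos 20%positive, 1%Z)] (BNode BLeaf [::(Npos 43%positive, 1%Z)] (BNode BLeaf [::(Npos 69%positive, 1%Z)] BLeaf)))) [::(Npos 7%positive, 1%Z)] (BNode (BNode (BNode BLeaf [::(Npos 34%positive, 1%Z)] (BNode BLeaf [::(Npos 58%positive, 1%Z)] BLeaf)) [::(Npos 20%positive, 1%Z)] (BNode BLeaf [::(Npos 42%positive, 1%Z)] (BNode BLeaf [::(Npos 61%positive, 1%Z)] BLeaf))) [::] (BNode (BNode BLeaf [::] (BNode BLeaf [::(Npos 55%positive, 1%Z); (Npos 53%positive, (-1)%Z); (Npos 58%positive, 1%Z); (Npos 48%positive, 1%Z); (Npos 50%positive, (-1)%Z)] BLeaf)) [::] (BNode BLeaf [::] (BNode BLeaf [::(Npos 70%positive, 1%Z)] BLeaf))))) (BNode (BNode (BNode (BNode (BNode BLeaf BLeaf BLeaf) (BNode (BNode BLeaf [::(Npos 91%positive, 1%Z)]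 BLeaf) [::] BLeaf) BLeaf) (BNode (BNode (BNode BLeaf [::(Npos 87%positive, 1%Z)] BLeaf) [::] BLeaf) [::] BLeaf) (BNode (BNode BLeaf BLeaf BLeaf) BLeaf BLeaf)) (BNode (BNode (BNode BLeaf [::(Npos 45%positive, 1%Z)] BLeaf) [::] (BNode (BNode BLeaf [::(Npos 74%positive, 1%Z); (Npos 52%positive, 1%Z); (Npos 62%positive, (-1)%Z); (Npos 63%positive, (-1)%Z); (Npos 78%positive, 1%Z)] BLeaf) [::] BLeaf)) [::(Npos 23%positive, 1%Z)] (BNode (BNode (BNode BLeaf [::(Npos 78%positive, 1%Z)] BLeaf) [::] BLeaf) [::] BLeaf)) (BNode (BNode (BNode BLeaf BLeaf BLeaf) (BNode BLeaf [::(Npos 92%positive, 1%Z)] BLeaf) BLeaf) (BNode BLeaf [::] (BNode BLeaf [::(Npos 88%positive, 1%Z)] BLeaf)) (BNode (BNode BLeaf BLeaf BLeaf) BLeaf BLeaf))) (BNode (BNode (BNode BLeaf [::(Npos 37%positive, 1%Z)] BLeaf) [::(Npos 22%positive, 1%Z)] (BNode BLeaf [::] (BNode BLeaf [::(Npos 73%positive, 1%Z); (Npos 66%positive, (-1)%Z); (Npos 76%positive, 1%Z); (Npos 49%positive, (-1)%Z); (Npos 54%positive, 1%Z); (Npos 62%positive, (-1)%Z); (Npos 52%positive, 1%Z)] BLeaf))) [::] (BNode (BNode BLeaf [::] (BNode BLeaf [::(Npos 76%positive, 1%Z)] BLeaf)) [::] BLeaf)) (BNode (BNode (BNode (BNode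 BLeaf BLeaf BLeaf) (BNode (BNode BLeaf [::(Npos 91%positive, 1%Z); (Npos 67%positive, (-1)%Z); (Npos 77%positive, 1%Z); (Npos 53%positive, 1%Z); (Npos 58%positive, (-1)%Z); (Npos 48%positive, (-1)%Z); (Npos 50%positive, 1%Z)] BLeaf) [::] BLeaf) BLeaf) (BNode (BNode (BNode BLeaf [::(Npos 87%positive, 1%Z); (Npos 66%positive, (-1)%Z); (Npos 76%positive, 1%Z)] BLeaf) [::] BLeaf) [::] BLeaf) (BNode (BNode BLeaf BLeaf BLeaf) BLeaf BLeaf)) (BNode (BNode BLeaf [::(Npos 47%positive, 1%Z)] (BNode BLeaf [::(Npos 68%positive, 1%Z); (Npos 48%positive, 1%Z); (Npos 53%positive, (-1)%Z); (Npos 65%positive, (-1)%Z); (Npos 80%positive, 1%Z)] BLeaf)) [::(Npos 39%positive, 1%Z)] (BNode (BNode BLeaf [::(Npos 80%positive, 1%Z)] BLeaf) [::] BLeaf)) (BNode (BNode (BNode BLeaf BLeaf BLeaf) (BNode BLeaf [::(Npos 92%positive, 1%Z); (Npos 50%positive, 1%Z); (Npos 58%positive, (-1)%Z); (Npos 64%positive, (-1)%Z); (Npos 79%positive, 1%Z)] BLeaf) BLeaf) (BNode BLeaf [::] (BNode BLeaf [::(Npos 88%positive, 1%Z); (Npos 67%positive, (-1)%Z); (Npos 77%positive, 1%Z)] BLeaf)) (BNode BLeaf BLeaf BLeaf)))))).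
Definition dtab : seq (term * zv * Z) := [::
((Var 0), [::(N0, 1%Z)], 1%Z);
((Mul (Var 0) (Var 0)), [::(Npos 4%positive, 1%Z)], 2%Z);
((Mul (Var 0) (Var 1)), [::(Npos 4%positive, 1%Z)], 1%Z);
((Mul (Var 0) (Mul (Var 0) (Var 0))), [::(Npos 16%positive, 1%Z)], 4%Z);
((Mul (Var 0) (Mul (Var 0) (Var 2))), [::(Npos 16%positive, 1%Z)], 2%Z);
((Mul (Var 0) (Mul (Var 1) (Var 0))), [::(Npos 16%positive, 1%Z)], 2%Z);
((Mul (Var 0) (Mul (Var 1) (Var 1))), [::(Npos 16%positive, 1%Z)], 4%Z);
((Mul (Var 0) (Mul (Var 1) (Var 2))), [::(Npos 16%positive, 1%Z)], 2%Z);
((Mul (Mul (Var 0) (Var 0)) (Var 0)), [::(Npos 16%positive, (-1)%Z); (Npos 17%positive, (-2)%Z); (Npos 18%positive, (-2)%Z)], 4%Z);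
((Mul (Mul (Var 0) (Var 0)) (Var 2)), [::(Npos 16%positive, (-1)%Z); (Npos 17%positive, (-2)%Z); (Npos 18%positive, (-2)%Z)], 4%Z);
((Mul (Mul (Var 0) (Var 1)) (Var 0)), [::(Npos 16%positive, (-1)%Z); (Npos 17%positive, (-2)%Z); (Npos 18%positive, (-2)%Z)], 2%Z);
((Mul (Mul (Var 0) (Var 1)) (Var 1)), [::(Npos 16%positive, (-1)%Z); (Npos 17%positive, (-2)%Z); (Npos 18%positive, (-2)%Z)], 2%Z);
((Mul (Mul (Var 0) (Var 1)) (Var 2)), [::(Npos 16%positive, (-1)%Z); (Npos 17%positive, (-2)%Z); (Npos 18%positive, (-2)%Z)], 2%Z);
((Mul (Var 0) (Mul (Var 0) (Mul (Var 0) (Var 0)))), [::(Npos 48%positive, 3%Z); (Npos 49%positive, 11%Z); (Npos 51%positive, 22%Z); (Npos 52%positive, 8%Z); (Npos 54%positive, 8%Z); (Npos 55%positive, 3%Z); (Npos 57%positive, 11%Z); (Npos 58%positive, (-2)%Z); (Npos 59%positive, 9%Z); (Npos 62%positive, (-2)%Z); (Npos 63%positive, (-6)%Z); (Npos 64%positive, (-6)%Z)], 24%Z);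
((Mul (Var 0) (Mul (Var 0) (Mul (Var 0) (Var 3)))), [::(Npos 48%positive, 3%Z); (Npos 49%positive, 11%Z); (Npos 51%positive, 22%Z); (Npos 52%positive, 8%Z); (Npos 54%positive, 8%Z); (Npos 55%positive, 3%Z); (Npos 57%positive, 11%Z); (Npos 58%positive, (-2)%Z); (Npos 59%positive, 9%Z); (Npos 62%positive, (-2)%Z); (Npos 63%positive, (-6)%Z); (Npos 64%positive, (-6)%Z)], 12%Z);
((Mul (Var 0) (Mul (Var 0) (Mul (Var 2) (Var 0)))), [::(Npos 48%positive, 3%Z); (Npos 49%positive, 11%Z); (Npos 51%positive, 22%Z); (Npos 52%positive, 8%Z); (Npos 54%positive, 8%Z); (Npos 55%positive, 3%Z); (Npos 57%positive, 11%Z); (Npos 58%positive, (-2)%Z); (Npos 59%positive, 9%Z); (Npos 62%positive, (-2)%Z); (Npos 63%positive, (-6)%Z); (Npos 64%positive, (-6)%Z)], 12%Z);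
((Mul (Var 0) (Mul (Var 0) (Mul (Var 2) (Var 2)))), [::(Npos 48%positive, 3%Z); (Npos 49%positive, 11%Z); (Npos 51%positive, 22%Z); (Npos 52%positive, 8%Z); (Npos 54%positive, 8%Z); (Npos 55%positive, 3%Z); (Npos 57%positive, 11%Z); (Npos 58%positive, (-2)%Z); (Npos 59%positive, 9%Z); (Npos 62%positive, (-2)%Z); (Npos 63%positive, (-6)%Z); (Npos 64%positive, (-6)%Z)], 24%Z);
((Mul (Var 0) (Mul (Var 0) (Mul (Var 2) (Var 3)))), [::(Npos 48%positive, 3%Z); (Npos 49%positive, 11%Z); (Npos 51%positive, 22%Z); (Npos 52%positive, 8%Z); (Npos 54%positive, 8%Z); (Npos 55%positive, 3%Z); (Npos 57%positive, 11%Z); (Npos 58%positive, (-2)%Z); (Npos 59%positive, 9%Z); (Npos 62%positive, (-2)%Z); (Npos 63%positive, (-6)%Z); (Npos 64%positive, (-6)%Z)], 12%Z);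
((Mul (Var 0) (Mul (Var 1) (Mul (Var 0) (Var 0)))), [::(Npos 48%positive, 3%Z); (Npos 49%positive, 11%Z); (Npos 51%positive, 22%Z); (Npos 52%positive, 8%Z); (Npos 54%positive, 8%Z); (Npos 55%positive, 3%Z); (Npos 57%positive, 11%Z); (Npos 58%positive, (-2)%Z); (Npos 59%positive, 9%Z); (Npos 62%positive, (-2)%Z); (Npos 63%positive, (-6)%Z); (Npos 64%positive, (-6)%Z)], 24%Z);
((Mul (Var 0) (Mul (Var 1) (Mul (Var 0) (Var 1)))), [::(Npos 48%positive, 3%Z); (Npos 49%positive, 11%Z); (Npos 51%positive, 22%Z); (Npos 52%positive, 8%Z); (Npos 54%positive, 8%Z); (Npos 55%positive, 3%Z); (Npos 57%positive, 11%Z); (Npos 58%positive, (-2)%Z); (Npos 59%positive, 9%Z); (Npos 62%positive, (-2)%Z); (Npos 63%positive, (-6)%Z); (Npos 64%positive, (-6)%Z)], 12%Z);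
((Mul (Var 0) (Mul (Var 1) (Mul (Var 0) (Var 3)))), [::(Npos 48%positive, 3%Z); (Npos 49%positive, 11%Z); (Npos 51%positive, 22%Z); (Npos 52%positive, 8%Z); (Npos 54%positive, 8%Z); (Npos 55%positive, 3%Z); (Npos 57%positive, 11%Z); (Npos 58%positive, (-2)%Z); (Npos 59%positive, 9%Z); (Npos 62%positive, (-2)%Z); (Npos 63%positive, (-6)%Z); (Npos 64%positive, (-6)%Z)], 12%Z);
((Mul (Var 0) (Mul (Var 1) (Mul (Var 1) (Var 0)))), [::(Npos 48%positive, 3%Z); (Npos 49%positive, 11%Z); (Npos 51%positive, 22%Z); (Npos 52%positive, 8%Z); (Npos 54%positive, 8%Z); (Npos 55%positive, 3%Z); (Npos 57%positive, 11%Z); (Npos 58%positive, (-2)%Z); (Npos 59%positive, 9%Z); (Npos 62%positive, (-2)%Z); (Npos 63%positive, (-6)%Z); (Npos 64%positive, (-6)%Z)], 12%Z);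
((Mul (Var 0) (Mul (Var 1) (Mul (Var 1) (Var 1)))), [::(Npos 48%positive, 3%Z); (Npos 49%positive, 11%Z); (Npos 51%positive, 22%Z); (Npos 52%positive, 8%Z); (Npos 54%positive, 8%Z); (Npos 55%positive, 3%Z); (Npos 57%positive, 11%Z); (Npos 58%positive, (-2)%Z); (Npos 59%positive, 9%Z); (Npos 62%positive, (-2)%Z); (Npos 63%positive, (-6)%Z); (Npos 64%positive, (-6)%Z)], 24%Z);
((Mul (Var 0) (Mul (Var 1) (Mul (Var 1) (Var 3)))), [::(Npos 48%positive, 3%Z); (Npos 49%positive, 11%Z); (Npos 51%positive, 22%Z); (Npos 52%positive, 8%Z); (Npos 54%positive, 8%Z); (Npos 55%positive, 3%Z); (Npos 57%positive, 11%Z); (Npos 58%positive, (-2)%Z); (Npos 59%positive, 9%Z); (Npos 62%positive, (-2)%Z); (Npos 63%positive, (-6)%Z); (Npos 64%positive, (-6)%Z)], 12%Z);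
((Mul (Var 0) (Mul (Var 1) (Mul (Var 2) (Var 0)))), [::(Npos 48%positive, 3%Z); (Npos 49%positive, 11%Z); (Npos 51%positive, 22%Z); (Npos 52%positive, 8%Z); (Npos 54%positive, 8%Z); (Npos 55%positive, 3%Z); (Npos 57%positive, 11%Z); (Npos 58%positive, (-2)%Z); (Npos 59%positive, 9%Z); (Npos 62%positive, (-2)%Z); (Npos 63%positive, (-6)%Z); (Npos 64%positive, (-6)%Z)], 12%Z);
((Mul (Var 0) (Mul (Var 1) (Mul (Var 2) (Var 1)))), [::(Npos 48%positive, 3%Z); (Npos 49%positive, 11%Z); (Npos 51%positive, 22%Z); (Npos 52%positive, 8%Z); (Npos 54%positive, 8%Z); (Npos 55%positive, 3%Z); (Npos 57%positive, 11%Z); (Npos 58%positive, (-2)%Z); (Npos 59%positive, 9%Z); (Npos 62%positive, (-2)%Z); (Npos 63%positive, (-6)%Z); (Npos 64%positive, (-6)%Z)], 12%Z);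
((Mul (Var 0) (Mul (Var 1) (Mul (Var 2) (Var 2)))), [::(Npos 48%positive, 3%Z); (Npos 49%positive, 11%Z); (Npos 51%positive, 22%Z); (Npos 52%positive, 8%Z); (Npos 54%positive, 8%Z); (Npos 55%positive, 3%Z); (Npos 57%positive, 11%Z); (Npos 58%positive, (-2)%Z); (Npos 59%positive, 9%Z); (Npos 62%positive, (-2)%Z); (Npos 63%positive, (-6)%Z); (Npos 64%positive, (-6)%Z)], 24%Z);
((Mul (Var 0) (Mul (Var 1) (Mul (Var 2) (Var 3)))), [::(Npos 48%positive, 3%Z); (Npos 49%positive, 11%Z); (Npos 51%positive, 22%Z); (Npos 52%positive, 8%Z); (Npos 54%positive, 8%Z); (Npos 55%positive, 3%Z); (Npos 57%positive, 11%Z); (Npos 58%positive, (-2)%Z); (Npos 59%positive, 9%Z); (Npos 62%positive, (-2)%Z); (Npos 63%positive, (-6)%Z); (Npos 64%positive, (-6)%Z)], 12%Z);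
((Mul (Var 0) (Mul (Mul (Var 0) (Var 0)) (Var 0))), [::(Npos 48%positive, (-4)%Z); (Npos 49%positive, 5%Z); (Npos 50%positive, (-4)%Z); (Npos 51%positive, 5%Z); (Npos 52%positive, 5%Z); (Npos 54%positive, 1%Z); (Npos 55%positive, (-1)%Z); (Npos 59%positive, 1%Z)], 96%Z);
((Mul (Var 0) (Mul (Mul (Var 0) (Var 0)) (Var 3))), [::(Npos 48%positive, (-4)%Z); (Npos 49%positive, 5%Z); (Npos 50%positive, (-4)%Z); (Npos 51%positive, 5%Z); (Npos 52%positive, 5%Z); (Npos 54%positive, 1%Z); (Npos 55%positive, (-1)%Z); (Npos 59%positive, 1%Z)], 96%Z);
((Mul (Var 0) (Mul (Mul (Var 0) (Var 2)) (Var 0))), [::(Npos 48%positive, (-4)%Z); (Npos 49%positive, 5%Z); (Npos 50%positive, (-4)%Z); (Npos 51%positive, 5%Z); (Npos 52%positive, 5%Z); (Npos 54%positive, 1%Z); (Npos 55%positive, (-1)%Z); (Npos 59%positive, 1%Z)], 48%Z);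
((Mul (Var 0) (Mul (Mul (Var 0) (Var 2)) (Var 2))), [::(Npos 48%positive, (-4)%Z); (Npos 49%positive, 5%Z); (Npos 50%positive, (-4)%Z); (Npos 51%positive, 5%Z); (Npos 52%positive, 5%Z); (Npos 54%positive, 1%Z); (Npos 55%positive, (-1)%Z); (Npos 59%positive, 1%Z)], 48%Z);
((Mul (Var 0) (Mul (Mul (Var 0) (Var 2)) (Var 3))), [::(Npos 48%positive, (-4)%Z); (Npos 49%positive, 5%Z); (Npos 50%positive, (-4)%Z); (Npos 51%positive, 5%Z); (Npos 52%positive, 5%Z); (Npos 54%positive, 1%Z); (Npos 55%positive, (-1)%Z); (Npos 59%positive, 1%Z)], 48%Z);
((Mul (Var 0) (Mul (Mul (Var 1) (Var 0)) (Var 0))), [::(Npos 48%positive, (-4)%Z); (Npos 49%positive, 5%Z); (Npos 50%positive, (-4)%Z); (Npos 51%positive, 5%Z); (Npos 52%positive, 5%Z); (Npos 54%positive, 1%Z); (Npos 55%positive, (-1)%Z); (Npos 59%positive, 1%Z)], 48%Z);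
((Mul (Var 0) (Mul (Mul (Var 1) (Var 0)) (Var 1))), [::(Npos 48%positive, (-4)%Z); (Npos 49%positive, 5%Z); (Npos 50%positive, (-4)%Z); (Npos 51%positive, 5%Z); (Npos 52%positive, 5%Z); (Npos 54%positive, 1%Z); (Npos 55%positive, (-1)%Z); (Npos 59%positive, 1%Z)], 48%Z);
((Mul (Var 0) (Mul (Mul (Var 1) (Var 0)) (Var 3))), [::(Npos 48%positive, (-4)%Z); (Npos 49%positive, 5%Z); (Npos 50%positive, (-4)%Z); (Npos 51%positive, 5%Z); (Npos 52%positive, 5%Z); (Npos 54%positive, 1%Z); (Npos 55%positive, (-1)%Z); (Npos 59%positive, 1%Z)], 48%Z);
((Mul (Var 0) (Mul (Mul (Var 1) (Var 1)) (Var 0))), [::(Npos 48%positive, (-4)%Z); (Npos 49%positive, 5%Z); (Npos 50%positive, (-4)%Z); (Npos 51%positive, 5%Z); (Npos 52%positive, 5%Z); (Npos 54%positive, 1%Z); (Npos 55%positive, (-1)%Z); (Npos 59%positive, 1%Z)], 96%Z);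
((Mul (Var 0) (Mul (Mul (Var 1) (Var 1)) (Var 1))), [::(Npos 48%positive, (-4)%Z); (Npos 49%positive, 5%Z); (Npos 50%positive, (-4)%Z); (Npos 51%positive, 5%Z); (Npos 52%positive, 5%Z); (Npos 54%positive, 1%Z); (Npos 55%positive, (-1)%Z); (Npos 59%positive, 1%Z)], 96%Z);
((Mul (Var 0) (Mul (Mul (Var 1) (Var 1)) (Var 3))), [::(Npos 48%positive, (-4)%Z); (Npos 49%positive, 5%Z); (Npos 50%positive, (-4)%Z); (Npos 51%positive, 5%Z); (Npos 52%positive, 5%Z); (Npos 54%positive, 1%Z); (Npos 55%positive, (-1)%Z); (Npos 59%positive, 1%Z)], 96%Z);
((Mul (Var 0) (Mul (Mul (Var 1) (Var 2)) (Var 0))), [::(Npos 48%positive, (-4)%Z); (Npos 49%positive, 5%Z); (Npos 50%positive, (-4)%Z); (Npos 51%positive, 5%Z); (Npos 52%positive, 5%Z); (Npos 54%positive, 1%Z); (Npos 55%positive, (-1)%Z); (Npos 59%positive, 1%Z)], 48%Z);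
((Mul (Var 0) (Mul (Mul (Var 1) (Var 2)) (Var 1))), [::(Npos 48%positive, (-4)%Z); (Npos 49%positive, 5%Z); (Npos 50%positive, (-4)%Z); (Npos 51%positive, 5%Z); (Npos 52%positive, 5%Z); (Npos 54%positive, 1%Z); (Npos 55%positive, (-1)%Z); (Npos 59%positive, 1%Z)], 48%Z);
((Mul (Var 0) (Mul (Mul (Var 1) (Var 2)) (Var 2))), [::(Npos 48%positive, (-4)%Z); (Npos 49%positive, 5%Z); (Npos 50%positive, (-4)%Z); (Npos 51%positive, 5%Z); (Npos 52%positive, 5%Z); (Npos 54%positive, 1%Z); (Npos 55%positive, (-1)%Z); (Npos 59%positive, 1%Z)], 48%Z);
((Mul (Var 0) (Mul (Mul (Var 1) (Var 2)) (Var 3))), [::(Npos 48%positive, (-4)%Z); (Npos 49%positive, 5%Z); (Npos 50%positive, (-4)%Z); (Npos 51%positive, 5%Z); (Npos 52%positive, 5%Z); (Npos 54%positive, 1%Z); (Npos 55%positive, (-1)%Z); (Npos 59%positive, 1%Z)], 48%Z);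
((Mul (Mul (Var 0) (Var 0)) (Mul (Var 0) (Var 0))), [::(Npos 48%positive, (-12)%Z); (Npos 49%positive, 7%Z); (Npos 50%positive, (-12)%Z); (Npos 51%positive, 71%Z); (Npos 52%positive, 7%Z); (Npos 53%positive, (-24)%Z); (Npos 54%positive, (-5)%Z); (Npos 55%positive, (-3)%Z); (Npos 57%positive, 16%Z); (Npos 58%positive, (-16)%Z); (Npos 59%positive, 27%Z); (Npos 62%positive, (-16)%Z); (Npos 63%positive, (-24)%Z); (Npos 64%positive, (-24)%Z); (Npos 65%positive, (-24)%Z)], 384%Z);
((Mul (Mul (Var 0) (Var 0)) (Mul (Var 0) (Var 3))), [::(Npos 48%positive, (-12)%Z); (Npos 49%positive, 7%Z); (Npos 50%positive, (-12)%Z); (Npos 51%positive, 71%Z); (Npos 52%positive, 7%Z); (Npos 53%positive, (-24)%Z); (Npos 54%positive, (-5)%Z); (Npos 55%positive, (-3)%Z); (Npos 57%positive, 16%Z); (Npos 58%positive, (-16)%Z); (Npos 59%positive, 27%Z); (Npos 62%positive, (-16)%Z); (Npos 63%positive, (-24)%Z); (Npos 64%positive, (-24)%Z); (Npos 65%positive, (-24)%Z)], 96%Z);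
((Mul (Mul (Var 0) (Var 0)) (Mul (Var 2) (Var 0))), [::(Npos 48%positive, (-12)%Z); (Npos 49%positive, 7%Z); (Npos 50%positive, (-12)%Z); (Npos 51%positive, 71%Z); (Npos 52%positive, 7%Z); (Npos 53%positive, (-24)%Z); (Npos 54%positive, (-5)%Z); (Npos 55%positive, (-3)%Z); (Npos 57%positive, 16%Z); (Npos 58%positive, (-16)%Z); (Npos 59%positive, 27%Z); (Npos 62%positive, (-16)%Z); (Npos 63%positive, (-24)%Z); (Npos 64%positive, (-24)%Z); (Npos 65%positive, (-24)%Z)], 96%Z);
((Mul (Mul (Var 0) (Var 0)) (Mul (Var 2) (Var 2))), [::(Npos 48%positive, (-12)%Z); (Npos 49%positive, 7%Z); (Npos 50%positive, (-12)%Z); (Npos 51%positive, 71%Z); (Npos 52%positive, 7%Z); (Npos 53%positive, (-24)%Z); (Npos 54%positive, (-5)%Z); (Npos 55%positive, (-3)%Z); (Npos 57%positive, 16%Z); (Npos 58%positive, (-16)%Z); (Npos 59%positive, 27%Z); (Npos 62%positive, (-16)%Z); (Npos 63%positive, (-24)%Z); (Npos 64%positive, (-24)%Z); (Npos 65%positive, (-24)%Z)], 192%Z);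
((Mul (Mul (Var 0) (Var 0)) (Mul (Var 2) (Var 3))), [::(Npos 48%positive, (-12)%Z); (Npos 49%positive, 7%Z); (Npos 50%positive, (-12)%Z); (Npos 51%positive, 71%Z); (Npos 52%positive, 7%Z); (Npos 53%positive, (-24)%Z); (Npos 54%positive, (-5)%Z); (Npos 55%positive, (-3)%Z); (Npos 57%positive, 16%Z); (Npos 58%positive, (-16)%Z); (Npos 59%positive, 27%Z); (Npos 62%positive, (-16)%Z); (Npos 63%positive, (-24)%Z); (Npos 64%positive, (-24)%Z); (Npos 65%positive, (-24)%Z)], 96%Z);
((Mul (Mul (Var 0) (Var 1)) (Mul (Var 0) (Var 0))), [::(Npos 48%positive, (-12)%Z); (Npos 49%positive, 7%Z); (Npos 50%positive, (-12)%Z); (Npos 51%positive, 71%Z); (Npos 52%positive, 7%Z); (Npos 53%positive, (-24)%Z); (Npos 54%positive, (-5)%Z); (Npos 55%positive, (-3)%Z); (Npos 57%positive, 16%Z); (Npos 58%positive, (-16)%Z); (Npos 59%positive, 27%Z); (Npos 62%positive, (-16)%Z); (Npos 63%positive, (-24)%Z); (Npos 64%positive, (-24)%Z); (Npos 65%positive, (-24)%Z)], 96%Z);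
((Mul (Mul (Var 0) (Var 1)) (Mul (Var 0) (Var 1))), [::(Npos 48%positive, (-12)%Z); (Npos 49%positive, 7%Z); (Npos 50%positive, (-12)%Z); (Npos 51%positive, 71%Z); (Npos 52%positive, 7%Z); (Npos 53%positive, (-24)%Z); (Npos 54%positive, (-5)%Z); (Npos 55%positive, (-3)%Z); (Npos 57%positive, 16%Z); (Npos 58%positive, (-16)%Z); (Npos 59%positive, 27%Z); (Npos 62%positive, (-16)%Z); (Npos 63%positive, (-24)%Z); (Npos 64%positive, (-24)%Z); (Npos 65%positive, (-24)%Z)], 96%Z);
((Mul (Mul (Var 0) (Var 1)) (Mul (Var 0) (Var 3))), [::(Npos 48%positive, (-12)%Z); (Npos 49%positive, 7%Z); (Npos 50%positive, (-12)%Z); (Npos 51%positive, 71%Z); (Npos 52%positive, 7%Z); (Npos 53%positive, (-24)%Z); (Npos 54%positive, (-5)%Z); (Npos 55%positive, (-3)%Z); (Npos 57%positive, 16%Z); (Npos 58%positive, (-16)%Z); (Npos 59%positive, 27%Z); (Npos 62%positive, (-16)%Z); (Npos 63%positive, (-24)%Z); (Npos 64%positive, (-24)%Z); (Npos 65%positive, (-24)%Z)], 48%Z);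
((Mul (Mul (Var 0) (Var 1)) (Mul (Var 1) (Var 0))), [::(Npos 48%positive, (-12)%Z); (Npos 49%positive, 7%Z); (Npos 50%positive, (-12)%Z); (Npos 51%positive, 71%Z); (Npos 52%positive, 7%Z); (Npos 53%positive, (-24)%Z); (Npos 54%positive, (-5)%Z); (Npos 55%positive, (-3)%Z); (Npos 57%positive, 16%Z); (Npos 58%positive, (-16)%Z); (Npos 59%positive, 27%Z); (Npos 62%positive, (-16)%Z); (Npos 63%positive, (-24)%Z); (Npos 64%positive, (-24)%Z); (Npos 65%positive, (-24)%Z)], 96%Z);
((Mul (Mul (Var 0) (Var 1)) (Mul (Var 1) (Var 1))), [::(Npos 48%positive, (-12)%Z); (Npos 49%positive, 7%Z); (Npos 50%positive, (-12)%Z); (Npos 51%positive, 71%Z); (Npos 52%positive, 7%Z); (Npos 53%positive, (-24)%Z); (Npos 54%positive, (-5)%Z); (Npos 55%positive, (-3)%Z); (Npos 57%positive, 16%Z); (Npos 58%positive, (-16)%Z); (Npos 59%positive, 27%Z); (Npos 62%positive, (-16)%Z); (Npos 63%positive, (-24)%Z); (Npos 64%positive, (-24)%Z); (Npos 65%positive, (-24)%Z)], 96%Z);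
((Mul (Mul (Var 0) (Var 1)) (Mul (Var 1) (Var 3))), [::(Npos 48%positive, (-12)%Z); (Npos 49%positive, 7%Z); (Npos 50%positive, (-12)%Z); (Npos 51%positive, 71%Z); (Npos 52%positive, 7%Z); (Npos 53%positive, (-24)%Z); (Npos 54%positive, (-5)%Z); (Npos 55%positive, (-3)%Z); (Npos 57%positive, 16%Z); (Npos 58%positive, (-16)%Z); (Npos 59%positive, 27%Z); (Npos 62%positive, (-16)%Z); (Npos 63%positive, (-24)%Z); (Npos 64%positive, (-24)%Z); (Npos 65%positive, (-24)%Z)], 48%Z);
((Mul (Mul (Var 0) (Var 1)) (Mul (Var 2) (Var 0))), [::(Npos 48%positive, (-12)%Z); (Npos 49%positive, 7%Z); (Npos 50%positive, (-12)%Z); (Npos 51%positive, 71%Z); (Npos 52%positive, 7%Z); (Npos 53%positive, (-24)%Z); (Npos 54%positive, (-5)%Z); (Npos 55%positive, (-3)%Z); (Npos 57%positive, 16%Z); (Npos 58%positive, (-16)%Z); (Npos 59%positive, 27%Z); (Npos 62%positive, (-16)%Z); (Npos 63%positive, (-24)%Z); (Npos 64%positive, (-24)%Z); (Npos 65%positive, (-24)%Z)], 48%Z);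
((Mul (Mul (Var 0) (Var 1)) (Mul (Var 2) (Var 1))), [::(Npos 48%positive, (-12)%Z); (Npos 49%positive, 7%Z); (Npos 50%positive, (-12)%Z); (Npos 51%positive, 71%Z); (Npos 52%positive, 7%Z); (Npos 53%positive, (-24)%Z); (Npos 54%positive, (-5)%Z); (Npos 55%positive, (-3)%Z); (Npos 57%positive, 16%Z); (Npos 58%positive, (-16)%Z); (Npos 59%positive, 27%Z); (Npos 62%positive, (-16)%Z); (Npos 63%positive, (-24)%Z); (Npos 64%positive, (-24)%Z); (Npos 65%positive, (-24)%Z)], 48%Z);
((Mul (Mul (Var 0) (Var 1)) (Mul (Var 2) (Var 2))), [::(Npos 48%positive, (-12)%Z); (Npos 49%positive, 7%Z); (Npos 50%positive, (-12)%Z); (Npos 51%positive, 71%Z); (Npos 52%positive, 7%Z); (Npos 53%positive, (-24)%Z); (Npos 54%positive, (-5)%Z); (Npos 55%positive, (-3)%Z); (Npos 57%positive, 16%Z); (Npos 58%positive, (-16)%Z); (Npos 59%positive, 27%Z); (Npos 62%positive, (-16)%Z); (Npos 63%positive, (-24)%Z); (Npos 64%positive, (-24)%Z); (Npos 65%positive, (-24)%Z)], 96%Z);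
((Mul (Mul (Var 0) (Var 1)) (Mul (Var 2) (Var 3))), [::(Npos 48%positive, (-12)%Z); (Npos 49%positive, 7%Z); (Npos 50%positive, (-12)%Z); (Npos 51%positive, 71%Z); (Npos 52%positive, 7%Z); (Npos 53%positive, (-24)%Z); (Npos 54%positive, (-5)%Z); (Npos 55%positive, (-3)%Z); (Npos 57%positive, 16%Z); (Npos 58%positive, (-16)%Z); (Npos 59%positive, 27%Z); (Npos 62%positive, (-16)%Z); (Npos 63%positive, (-24)%Z); (Npos 64%positive, (-24)%Z); (Npos 65%positive, (-24)%Z)], 48%Z);
((Mul (Mul (Var 0) (Mul (Var 0) (Var 0))) (Var 0)), [::(Npos 48%positive, (-16)%Z); (Npos 49%positive, (-1)%Z); (Npos 50%positive, (-16)%Z); (Npos 51%positive, (-1)%Z); (Npos 52%positive, 5%Z); (Npos 53%positive, (-18)%Z); (Npos 54%positive, 1%Z); (Npos 55%positive, (-1)%Z); (Npos 58%positive, (-18)%Z); (Npos 59%positive, 1%Z); (Npos 62%positive, 24%Z); (Npos 64%positive, (-12)%Z); (Npos 65%positive, (-12)%Z)], 96%Z);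
((Mul (Mul (Var 0) (Mul (Var 0) (Var 0))) (Var 3)), [::(Npos 48%positive, (-16)%Z); (Npos 49%positive, (-1)%Z); (Npos 50%positive, (-16)%Z); (Npos 51%positive, (-1)%Z); (Npos 52%positive, 5%Z); (Npos 53%positive, (-18)%Z); (Npos 54%positive, 1%Z); (Npos 55%positive, (-1)%Z); (Npos 58%positive, (-18)%Z); (Npos 59%positive, 1%Z); (Npos 62%positive, 24%Z); (Npos 64%positive, (-12)%Z); (Npos 65%positive, (-12)%Z)], 96%Z);
((Mul (Mul (Var 0) (Mul (Var 0) (Var 2))) (Var 0)), [::(Npos 48%positive, (-16)%Z); (Npos 49%positive, (-1)%Z); (Npos 50%positive, (-16)%Z); (Npos 51%positive, (-1)%Z); (Npos 52%positive, 5%Z); (Npos 53%positive, (-18)%Z); (Npos 54%positive, 1%Z); (Npos 55%positive, (-1)%Z); (Npos 58%positive, (-18)%Z); (Npos 59%positive, 1%Z); (Npos 62%positive, 24%Z); (Npos 64%positive, (-12)%Z); (Npos 65%positive, (-12)%Z)], 48%Z);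
((Mul (Mul (Var 0) (Mul (Var 0) (Var 2))) (Var 2)), [::(Npos 48%positive, (-16)%Z); (Npos 49%positive, (-1)%Z); (Npos 50%positive, (-16)%Z); (Npos 51%positive, (-1)%Z); (Npos 52%positive, 5%Z); (Npos 53%positive, (-18)%Z); (Npos 54%positive, 1%Z); (Npos 55%positive, (-1)%Z); (Npos 58%positive, (-18)%Z); (Npos 59%positive, 1%Z); (Npos 62%positive, 24%Z); (Npos 64%positive, (-12)%Z); (Npos 65%positive, (-12)%Z)], 48%Z);
((Mul (Mul (Var 0) (Mul (Var 0) (Var 2))) (Var 3)), [::(Npos 48%positive, (-16)%Z); (Npos 49%positive, (-1)%Z); (Npos 50%positive, (-16)%Z); (Npos 51%positive, (-1)%Z); (Npos 52%positive, 5%Z); (Npos 53%positive, (-18)%Z); (Npos 54%positive, 1%Z); (Npos 55%positive, (-1)%Z); (Npos 58%positive, (-18)%Z); (Npos 59%positive, 1%Z); (Npos 62%positive, 24%Z); (Npos 64%positive, (-12)%Z); (Npos 65%positive, (-12)%Z)], 48%Z);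
((Mul (Mul (Var 0) (Mul (Var 1) (Var 0))) (Var 0)), [::(Npos 48%positive, (-16)%Z); (Npos 49%positive, (-1)%Z); (Npos 50%positive, (-16)%Z); (Npos 51%positive, (-1)%Z); (Npos 52%positive, 5%Z); (Npos 53%positive, (-18)%Z); (Npos 54%positive, 1%Z); (Npos 55%positive, (-1)%Z); (Npos 58%positive, (-18)%Z); (Npos 59%positive, 1%Z); (Npos 62%positive, 24%Z); (Npos 64%positive, (-12)%Z); (Npos 65%positive, (-12)%Z)], 48%Z);
((Mul (Mul (Var 0) (Mul (Var 1) (Var 0))) (Var 1)), [::(Npos 48%positive, (-16)%Z); (Npos 49%positive, (-1)%Z); (Npos 50%positive, (-16)%Z); (Npos 51%positive, (-1)%Z); (Npos 52%positive, 5%Z); (Npos 53%positive, (-18)%Z); (Npos 54%positive, 1%Z); (Npos 55%positive, (-1)%Z); (Npos 58%positive, (-18)%Z); (Npos 59%positive, 1%Z); (Npos 62%positive, 24%Z); (Npos 64%positive, (-12)%Z); (Npos 65%positive, (-12)%Z)], 48%Z);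
((Mul (Mul (Var 0) (Mul (Var 1) (Var 0))) (Var 3)), [::(Npos 48%positive, (-16)%Z); (Npos 49%positive, (-1)%Z); (Npos 50%positive, (-16)%Z); (Npos 51%positive, (-1)%Z); (Npos 52%positive, 5%Z); (Npos 53%positive, (-18)%Z); (Npos 54%positive, 1%Z); (Npos 55%positive, (-1)%Z); (Npos 58%positive, (-18)%Z); (Npos 59%positive, 1%Z); (Npos 62%positive, 24%Z); (Npos 64%positive, (-12)%Z); (Npos 65%positive, (-12)%Z)], 48%Z);
((Mul (Mul (Var 0) (Mul (Var 1) (Var 1))) (Var 0)), [::(Npos 48%positive, (-16)%Z); (Npos 49%positive, (-1)%Z); (Npos 50%positive, (-16)%Z); (Npos 51%positive, (-1)%Z); (Npos 52%positive, 5%Z); (Npos 53%positive, (-18)%Z); (Npos 54%positive, 1%Z); (Npos 55%positive, (-1)%Z); (Npos 58%positive, (-18)%Z); (Npos 59%positive, 1%Z); (Npos 62%positive, 24%Z); (Npos 64%positive, (-12)%Z); (Npos 65%positive, (-12)%Z)], 96%Z);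
((Mul (Mul (Var 0) (Mul (Var 1) (Var 1))) (Var 1)), [::(Npos 48%positive, (-16)%Z); (Npos 49%positive, (-1)%Z); (Npos 50%positive, (-16)%Z); (Npos 51%positive, (-1)%Z); (Npos 52%positive, 5%Z); (Npos 53%positive, (-18)%Z); (Npos 54%positive, 1%Z); (Npos 55%positive, (-1)%Z); (Npos 58%positive, (-18)%Z); (Npos 59%positive, 1%Z); (Npos 62%positive, 24%Z); (Npos 64%positive, (-12)%Z); (Npos 65%positive, (-12)%Z)], 96%Z);
((Mul (Mul (Var 0) (Mul (Var 1) (Var 1))) (Var 3)), [::(Npos 48%positive, (-16)%Z); (Npos 49%positive, (-1)%Z); (Npos 50%positive, (-16)%Z); (Npos 51%positive, (-1)%Z); (Npos 52%positive, 5%Z); (Npos 53%positive, (-18)%Z); (Npos 54%positive, 1%Z); (Npos 55%positive, (-1)%Z); (Npos 58%positive, (-18)%Z); (Npos 59%positive, 1%Z); (Npos 62%positive, 24%Z); (Npos 64%positive, (-12)%Z); (Npos 65%positive, (-12)%Z)], 96%Z);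
((Mul (Mul (Var 0) (Mul (Var 1) (Var 2))) (Var 0)), [::(Npos 48%positive, (-16)%Z); (Npos 49%positive, (-1)%Z); (Npos 50%positive, (-16)%Z); (Npos 51%positive, (-1)%Z); (Npos 52%positive, 5%Z); (Npos 53%positive, (-18)%Z); (Npos 54%positive, 1%Z); (Npos 55%positive, (-1)%Z); (Npos 58%positive, (-18)%Z); (Npos 59%positive, 1%Z); (Npos 62%positive, 24%Z); (Npos 64%positive, (-12)%Z); (Npos 65%positive, (-12)%Z)], 48%Z);
((Mul (Mul (Var 0) (Mul (Var 1) (Var 2))) (Var 1)), [::(Npos 48%positive, (-16)%Z); (Npos 49%positive, (-1)%Z); (Npos 50%positive, (-16)%Z); (Npos 51%positive, (-1)%Z); (Npos 52%positive, 5%Z); (Npos 53%positive, (-18)%Z); (Npos 54%positive, 1%Z); (Npos 55%positive, (-1)%Z); (Npos 58%positive, (-18)%Z); (Npos 59%positive, 1%Z); (Npos 62%positive, 24%Z); (Npos 64%positive, (-12)%Z); (Npos 65%positive, (-12)%Z)], 48%Z);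
((Mul (Mul (Var 0) (Mul (Var 1) (Var 2))) (Var 2)), [::(Npos 48%positive, (-16)%Z); (Npos 49%positive, (-1)%Z); (Npos 50%positive, (-16)%Z); (Npos 51%positive, (-1)%Z); (Npos 52%positive, 5%Z); (Npos 53%positive, (-18)%Z); (Npos 54%positive, 1%Z); (Npos 55%positive, (-1)%Z); (Npos 58%positive, (-18)%Z); (Npos 59%positive, 1%Z); (Npos 62%positive, 24%Z); (Npos 64%positive, (-12)%Z); (Npos 65%positive, (-12)%Z)], 48%Z);
((Mul (Mul (Var 0) (Mul (Var 1) (Var 2))) (Var 3)), [::(Npos 48%positive, (-16)%Z); (Npos 49%positive, (-1)%Z); (Npos 50%positive, (-16)%Z); (Npos 51%positive, (-1)%Z); (Npos 52%positive, 5%Z); (Npos 53%positive, (-18)%Z); (Npos 54%positive, 1%Z); (Npos 55%positive, (-1)%Z); (Npos 58%positive, (-18)%Z); (Npos 59%positive, 1%Z); (Npos 62%positive, 24%Z); (Npos 64%positive, (-12)%Z); (Npos 65%positive, (-12)%Z)], 48%Z);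
((Mul (Mul (Mul (Var 0) (Var 0)) (Var 0)) (Var 0)), [::(Npos 48%positive, 4%Z); (Npos 49%positive, (-13)%Z); (Npos 50%positive, (-4)%Z); (Npos 51%positive, 11%Z); (Npos 52%positive, (-17)%Z); (Npos 53%positive, 4%Z); (Npos 54%positive, (-13)%Z); (Npos 55%positive, (-3)%Z); (Npos 57%positive, (-16)%Z); (Npos 58%positive, (-4)%Z); (Npos 59%positive, 3%Z); (Npos 62%positive, (-16)%Z)], 96%Z);
((Mul (Mul (Mul (Var 0) (Var 0)) (Var 0)) (Var 3)), [::(Npos 48%positive, 4%Z); (Npos 49%positive, (-13)%Z); (Npos 50%positive, (-4)%Z); (Npos 51%positive, 11%Z); (Npos 52%positive, (-17)%Z); (Npos 53%positive, 4%Z); (Npos 54%positive, (-13)%Z); (Npos 55%positive, (-3)%Z); (Npos 57%positive, (-16)%Z); (Npos 58%positive, (-4)%Z); (Npos 59%positive, 3%Z); (Npos 62%positive, (-16)%Z)], 96%Z);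
((Mul (Mul (Mul (Var 0) (Var 0)) (Var 2)) (Var 0)), [::(Npos 48%positive, 4%Z); (Npos 49%positive, (-13)%Z); (Npos 50%positive, (-4)%Z); (Npos 51%positive, 11%Z); (Npos 52%positive, (-17)%Z); (Npos 53%positive, 4%Z); (Npos 54%positive, (-13)%Z); (Npos 55%positive, (-3)%Z); (Npos 57%positive, (-16)%Z); (Npos 58%positive, (-4)%Z); (Npos 59%positive, 3%Z); (Npos 62%positive, (-16)%Z)], 96%Z);
((Mul (Mul (Mul (Var 0) (Var 0)) (Var 2)) (Var 2)), [::(Npos 48%positive, 4%Z); (Npos 49%positive, (-13)%Z); (Npos 50%positive, (-4)%Z); (Npos 51%positive, 11%Z); (Npos 52%positive, (-17)%Z); (Npos 53%positive, 4%Z); (Npos 54%positive, (-13)%Z); (Npos 55%positive, (-3)%Z); (Npos 57%positive, (-16)%Z); (Npos 58%positive, (-4)%Z); (Npos 59%positive, 3%Z); (Npos 62%positive, (-16)%Z)], 96%Z);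
((Mul (Mul (Mul (Var 0) (Var 0)) (Var 2)) (Var 3)), [::(Npos 48%positive, 4%Z); (Npos 49%positive, (-13)%Z); (Npos 50%positive, (-4)%Z); (Npos 51%positive, 11%Z); (Npos 52%positive, (-17)%Z); (Npos 53%positive, 4%Z); (Npos 54%positive, (-13)%Z); (Npos 55%positive, (-3)%Z); (Npos 57%positive, (-16)%Z); (Npos 58%positive, (-4)%Z); (Npos 59%positive, 3%Z); (Npos 62%positive, (-16)%Z)], 96%Z);
((Mul (Mul (Mul (Var 0) (Var 1)) (Var 0)) (Var 0)), [::(Npos 48%positive, 4%Z); (Npos 49%positive, (-13)%Z); (Npos 50%positive, (-4)%Z); (Npos 51%positive, 11%Z); (Npos 52%positive, (-17)%Z); (Npos 53%positive, 4%Z); (Npos 54%positive, (-13)%Z); (Npos 55%positive, (-3)%Z); (Npos 57%positive, (-16)%Z); (Npos 58%positive, (-4)%Z); (Npos 59%positive, 3%Z); (Npos 62%positive, (-16)%Z)], 48%Z);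
((Mul (Mul (Mul (Var 0) (Var 1)) (Var 0)) (Var 1)), [::(Npos 48%positive, 4%Z); (Npos 49%positive, (-13)%Z); (Npos 50%positive, (-4)%Z); (Npos 51%positive, 11%Z); (Npos 52%positive, (-17)%Z); (Npos 53%positive, 4%Z); (Npos 54%positive, (-13)%Z); (Npos 55%positive, (-3)%Z); (Npos 57%positive, (-16)%Z); (Npos 58%positive, (-4)%Z); (Npos 59%positive, 3%Z); (Npos 62%positive, (-16)%Z)], 48%Z);
((Mul (Mul (Mul (Var 0) (Var 1)) (Var 0)) (Var 3)), [::(Npos 48%positive, 4%Z); (Npos 49%positive, (-13)%Z); (Npos 50%positive, (-4)%Z); (Npos 51%positive, 11%Z); (Npos 52%positive, (-17)%Z); (Npos 53%positive, 4%Z); (Npos 54%positive, (-13)%Z); (Npos 55%positive, (-3)%Z); (Npos 57%positive, (-16)%Z); (Npos 58%positive, (-4)%Z); (Npos 59%positive, 3%Z); (Npos 62%positive, (-16)%Z)], 48%Z);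
((Mul (Mul (Mul (Var 0) (Var 1)) (Var 1)) (Var 0)), [::(Npos 48%positive, 4%Z); (Npos 49%positive, (-13)%Z); (Npos 50%positive, (-4)%Z); (Npos 51%positive, 11%Z); (Npos 52%positive, (-17)%Z); (Npos 53%positive, 4%Z); (Npos 54%positive, (-13)%Z); (Npos 55%positive, (-3)%Z); (Npos 57%positive, (-16)%Z); (Npos 58%positive, (-4)%Z); (Npos 59%positive, 3%Z); (Npos 62%positive, (-16)%Z)], 48%Z);
((Mul (Mul (Mul (Var 0) (Var 1)) (Var 1)) (Var 1)), [::(Npos 48%positive, 4%Z); (Npos 49%positive, (-13)%Z); (Npos 50%positive, (-4)%Z); (Npos 51%positive, 11%Z); (Npos 52%positive, (-17)%Z); (Npos 53%positive, 4%Z); (Npos 54%positive, (-13)%Z); (Npos 55%positive, (-3)%Z); (Npos 57%positive, (-16)%Z); (Npos 58%positive, (-4)%Z); (Npos 59%positive, 3%Z); (Npos 62%positive, (-16)%Z)], 48%Z);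
((Mul (Mul (Mul (Var 0) (Var 1)) (Var 1)) (Var 3)), [::(Npos 48%positive, 4%Z); (Npos 49%positive, (-13)%Z); (Npos 50%positive, (-4)%Z); (Npos 51%positive, 11%Z); (Npos 52%positive, (-17)%Z); (Npos 53%positive, 4%Z); (Npos 54%positive, (-13)%Z); (Npos 55%positive, (-3)%Z); (Npos 57%positive, (-16)%Z); (Npos 58%positive, (-4)%Z); (Npos 59%positive, 3%Z); (Npos 62%positive, (-16)%Z)], 48%Z);
((Mul (Mul (Mul (Var 0) (Var 1)) (Var 2)) (Var 0)), [::(Npos 48%positive, 4%Z); (Npos 49%positive, (-13)%Z); (Npos 50%positive, (-4)%Z); (Npos 51%positive, 11%Z); (Npos 52%positive, (-17)%Z); (Npos 53%positive, 4%Z); (Npos 54%positive, (-13)%Z); (Npos 55%positive, (-3)%Z); (Npos 57%positive, (-16)%Z); (Npos 58%positive, (-4)%Z); (Npos 59%positive, 3%Z); (Npos 62%positive, (-16)%Z)], 48%Z);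
((Mul (Mul (Mul (Var 0) (Var 1)) (Var 2)) (Var 1)), [::(Npos 48%positive, 4%Z); (Npos 49%positive, (-13)%Z); (Npos 50%positive, (-4)%Z); (Npos 51%positive, 11%Z); (Npos 52%positive, (-17)%Z); (Npos 53%positive, 4%Z); (Npos 54%positive, (-13)%Z); (Npos 55%positive, (-3)%Z); (Npos 57%positive, (-16)%Z); (Npos 58%positive, (-4)%Z); (Npos 59%positive, 3%Z); (Npos 62%positive, (-16)%Z)], 48%Z);
((Mul (Mul (Mul (Var 0) (Var 1)) (Var 2)) (Var 2)), [::(Npos 48%positive, 4%Z); (Npos 49%positive, (-13)%Z); (Npos 50%positive, (-4)%Z); (Npos 51%positive, 11%Z); (Npos 52%positive, (-17)%Z); (Npos 53%positive, 4%Z); (Npos 54%positive, (-13)%Z); (Npos 55%positive, (-3)%Z); (Npos 57%positive, (-16)%Z); (Npos 58%positive, (-4)%Z); (Npos 59%positive, 3%Z); (Npos 62%positive, (-16)%Z)], 48%Z);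
((Mul (Mul (Mul (Var 0) (Var 1)) (Var 2)) (Var 3)), [::(Npos 48%positive, 4%Z); (Npos 49%positive, (-13)%Z); (Npos 50%positive, (-4)%Z); (Npos 51%positive, 11%Z); (Npos 52%positive, (-17)%Z); (Npos 53%positive, 4%Z); (Npos 54%positive, (-13)%Z); (Npos 55%positive, (-3)%Z); (Npos 57%positive, (-16)%Z); (Npos 58%positive, (-4)%Z); (Npos 59%positive, 3%Z); (Npos 62%positive, (-16)%Z)], 48%Z)].
Definition nBN : N := N.of_nat nB.
Definition Tij (i j : N) : zv :=
  if N.ltb i nBN && N.ltb j nBN then
    match bget Ttrie (N.succ_pos i) with
    | Some row => match bget row (N.succ_pos j) with Some v => v | None => [::] end
    | None => [::] end
  else [::].
Fixpoint coefZ (u : zv) (l : N) : Z :=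
  match u with [::] => 0%Z | p :: u' => if N.eqb p.1 l then Z.add p.2 (coefZ u' l) else coefZ u' l end.
Fixpoint insZ (l : N) (c : Z) (u : zv) : zv :=
  match u with
  | [::] => [:: (l, c)]
  | p :: u' => if N.eqb l p.1 then (l, Z.add c p.2) :: u'
               else if N.ltb l p.1 then (l, c) :: u else p :: insZ l c u'
  end.
Definition normZ (u : zv) : zv :=
  [seq p <- foldr (fun p acc => insZ p.1 p.2 acc) [::] u | negb (Z.eqb p.2 0)].
Definition mulZ0 (u v : zv) : zv :=
  flatten (allpairs (fun p r => [seq (q.1, Z.mul (Z.mul p.2 r.2) q.2) | q <- Tij p.1 r.1]) u v).
Definition mulZ u v := normZ (mulZ0 u v).
Definition addZ (u v : zv) := normZ (u ++ v).
Definition scZ (c : Z) (u : zv) : zv := [seq (p.1, Z.mul c p.2) | p <- u].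
Definition eZ (i : N) : zv := [:: (i, 1%Z)].
Definition lsymZ (a b c : zv) : zv :=
  addZ (addZ (mulZ (mulZ a b) c) (scZ (-1) (mulZ a (mulZ b c))))
       (addZ (scZ (-1) (mulZ (mulZ b a) c)) (mulZ b (mulZ a c))).
Definition B1Z (a b c : zv) : zv :=
  addZ (addZ (addZ (mulZ (mulZ a b) c) (scZ (-1) (mulZ (mulZ b a) c)))
             (addZ (scZ (-1) (mulZ (mulZ a c) b)) (mulZ (mulZ c a) b)))
       (addZ (mulZ (mulZ b c) a) (scZ (-1) (mulZ (mulZ c b) a))).
Definition idxN := [seq N.of_nat i | i <- iota 0 nB].
Definition idok (i j k : N) : bool :=
  (if nilp (Tij i j) && nilp (Tij j i) && nilp (Tij j k) && nilp (Tij i k) then true else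
     nilp (lsymZ (eZ i) (eZ j) (eZ k))) &&
  (if nilp (Tij i j) && nilp (Tij j i) && nilp (Tij i k) && nilp (Tij k i) && nilp (Tij j k) && nilp (Tij k j) then true else
     nilp (B1Z (eZ i) (eZ j) (eZ k))).
Definition idcheck : bool :=
  all (fun i => all (fun j => all (fun k => idok i j k) idxN) idxN) idxN.

Fixpoint leaves (t : term) : seq nat :=
  match t with Var n => [:: n] | Mul a b => leaves a ++ leaves b end.
Fixpoint tmap (r : nat -> nat) (t : term) : term :=
  match t with Var n => Var (r n) | Mul a b => Mul (tmap r a) (tmap r b) end.
Fixpoint eqcb (s t : term) : bool :=
  match s, t with
  | Var m, Var n => m == n
  | Mul s1 s2, Mul t1 t2 => (eqcb s1 t1 && eqcb s2 t2) || (eqcb s1 t2 && eqcb s2 t1)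
  | _, _ => false
  end.
Definition mulT (A B : seq term) : seq term := allpairs Mul A B.
Definition trees1 (labs : seq nat) := map Var labs.
Definition trees2 labs := mulT (trees1 labs) (trees1 labs).
Definition trees3 labs := mulT (trees1 labs) (trees2 labs) ++ mulT (trees2 labs) (trees1 labs).
Definition trees4 labs := mulT (trees1 labs) (trees3 labs) ++ mulT (trees2 labs) (trees2 labs)
   ++ mulT (trees3 labs) (trees1 labs).
Definition treesU labs := trees1 labs ++ trees2 labs ++ trees3 labs ++ trees4 labs.
Definition normalized (s : term) : bool :=
  let L := leaves s in L == map (fun x => index x L) L.
Definition wZ (s : term) (q : nat) : zv :=
  [seq (N.of_nat p, 1%Z) | p <- [seq p <- iota 0 (size (leaves s)) | nth 0 (leaves s) p == q]].
Fixpoint antiZ (W : nat -> zv) (t : term) : zv :=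
  match t with
  | Var n => W n
  | Mul a b => let x := antiZ W a in let y := antiZ W b in addZ (mulZ x y) (mulZ y x)
  end.
Fixpoint lookupD (s : term) (d : seq (term * zv * Z)) : zv * Z :=
  match d with
  | [::] => ([::], 0%Z)
  | e :: d' => if term_eqb e.1.1 s then (e.1.2, e.2) else lookupD s d'
  end.
Fixpoint dotZ (phi u : zv) : Z :=
  match phi with [::] => 0%Z | p :: phi' => Z.add (Z.mul p.2 (coefZ u p.1)) (dotZ phi' u) end.
Definition goodS (s : term) : bool :=
  let e := lookupD s dtab in
  negb (Z.eqb e.2 0) && all (fun p => N.ltb p.1 nBN) e.1 &&
  all (fun t => Z.eqb (dotZ e.1 (antiZ (wZ s) t)) (if eqcb t s then e.2 else 0%Z))
      (treesU (undup (leaves s))).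
Definition detcheck : bool := all (fun s => normalized s ==> goodS s) (treesU (iota 0 4)).

Lemma idcheck_ok : idcheck = true.
Proof. vm_cast_no_check (erefl true). Qed.
Lemma detcheck_ok : detcheck = true.
Proof. vm_cast_no_check (erefl true). Qed.
Local Open Scope ring_scope.

Fixpoint tcode (t : term) : GenTree.tree nat :=
  match t with
  | Var n => GenTree.Leaf n
  | Mul a b => GenTree.Node 0 [:: tcode a; tcode b]
  end.
Lemma tcode_inj : injective tcode.
Proof.
elim=> [m|a IHa b IHb] [n|c d] //=; first by case=> ->.
by case=> /IHa -> /IHb ->.
Qed.
Definition tnum (t : term) : nat := pickle (tcode t).
Lemma tnum_inj : injective tnum.
Proof. by move=> x y /(pcan_inj pickleK) /tcode_inj. Qed.
Definition srt (a b : term) : term := if leq (tnum a) (tnum b) then Mul a b else Mul b a.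
Lemma srtC a b : srt a b = srt b a.
Proof.
rewrite /srt; case: (leqP (tnum a) (tnum b)) => h1; case: (leqP (tnum b) (tnum a)) => h2 //.
have e : tnum a = tnum b by apply/eqP; rewrite eqn_leq h1 h2.
by rewrite (tnum_inj e).
by have := leq_trans h1 (ltnW h2); rewrite ltnn.
Qed.
Fixpoint can (t : term) : term :=
  match t with Var n => Var n | Mul a b => srt (can a) (can b) end.

Lemma eqcb_can s t : eqcb s t = (can s == can t).
Proof.
apply/idP/eqP.
  elim: s t => [m|s1 IH1 s2 IH2] [n|t1 t2] //=; first by move/eqP->.
  by case/orP=> /andP[/IH1 -> /IH2 ->] //; rewrite srtC.
elim: s t => [m|s1 IH1 s2 IH2] [n|t1 t2] /=.
- by case=> ->.
- by rewrite /srt; case: ifP.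
- by rewrite /srt; case: ifP.
rewrite /srt; case: ifP => _; case: ifP => _ [e1 e2].
- by rewrite (IH1 _ e1) (IH2 _ e2).
- by rewrite (IH1 _ e1) (IH2 _ e2) orbT.
- by rewrite (IH1 _ e2) (IH2 _ e1) orbT.
- by rewrite (IH1 _ e2) (IH2 _ e1).
Qed.
Ltac casebools u :=
  repeat match goal with |- context [?x == u] => case: (x == u) end;
  rewrite ?mulr1 ?mul1r ?mulrN1 ?mulN1r ?addr0 ?add0r ?mulr0 ?mul0r; ring.

Lemma coef_nil (K : fieldType) t : coef ([::] : napoly K) t = 0.
Proof. by rewrite /coef big_nil. Qed.
Lemma coef_cons (K : fieldType) (p : K * term) f t :
  coef (p :: f) t = (if p.2 == t then p.1 else 0) + coef f t.
Proof. by rewrite /coef big_cons; case: ifP; rewrite ?add0r. Qed.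
Lemma coef_cat (K : fieldType) (f g : napoly K) t : coef (f ++ g) t = coef f t + coef g t.
Proof. by rewrite /coef big_cat. Qed.
Lemma coef_scale (K : fieldType) c (f : napoly K) t : coef (pscale c f) t = c * coef f t.
Proof. by rewrite /coef /pscale big_map mulr_sumr. Qed.

Definition chi (K : fieldType) (f : napoly K) (s : term) : K :=
  \sum_(p <- f | eqcb p.2 s) p.1.

Definition diffT (K : fieldType) (t : term) : napoly K := [:: (1, t); (-1, can t)].

Lemma Tdiff (K : fieldType) t : Tideal [:: comm_id K] (diffT K t).
Proof.
elim: t => [n|a IHa b IHb].
  apply: (T_eq (T_zero _)) => u; rewrite /diffT !coef_cons coef_nil /=.
  by casebools u.
set a' := can a; set b' := can b.
have H1 := T_mulr [:: (1, b)] IHa.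
have H2 := T_mull [:: (1, a')] IHb.
have H12 := T_add H1 H2.
pose sg (n : nat) : napoly K := if n == 0%N then [:: (1, a')] else [:: (1, b')].
have H3 := T_subst sg (T_gen (mem_head (comm_id K) [::])).
rewrite /diffT /= /srt -/a' -/b'; case: ifP => _.
  apply: (T_eq H12) => u.
  rewrite /padd /pmul /= ?coef_cat !coef_cons !coef_nil /=.
  by casebools u.
apply: (T_eq (T_add H12 H3)) => u.
rewrite /padd /pmul /psubst /pscale /comm_id /= ?coef_cat !coef_cons !coef_nil /=.
by casebools u.
Qed.

Lemma conseq_of_chi (K : fieldType) (f : napoly K) :
  (forall p, p \in f -> chi f p.2 = 0) -> conseq_comm f.
Proof.
move=> Hchi.
pose D := flatten [seq pscale p.1 (diffT K p.2) | p <- f].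
pose G : napoly K := [seq (p.1, can p.2) | p <- f].
have TD : Tideal [:: comm_id K] D.
  rewrite /D; elim: (f) => [|p f' IH] /=; first exact: T_zero.
  exact: (T_add (T_scale _ (Tdiff K _)) IH).
have TG : Tideal [:: comm_id K] G.
  apply: (T_eq (T_zero _)) => u; rewrite coef_nil /coef /G big_map /=.
  case: (boolP (has (fun p : K * term => can p.2 == u) f)) => [/hasP[p0 p0f /eqP e0]|hn].
    transitivity (chi f p0.2); first by rewrite Hchi.
    by rewrite /chi; apply: eq_bigl => q; rewrite eqcb_can e0.
  by rewrite big_hasC.
apply: (T_eq (T_add TD TG)) => u.
rewrite /D /G; elim: (f) => [|p f' IH] /=; first by [].
rewrite /padd coef_cat in IH; rewrite /padd !coef_cons coef_cat coef_cons -IH /=.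
by casebools u.
Qed.
Definition zK (K : fieldType) (z : Z) : K := (int_of_Z z)%:~R.
Lemma zK_add (K : fieldType) a b : zK K (Z.add a b) = zK K a + zK K b.
Proof. by rewrite /zK (rmorphD int_of_Z a b) intrD. Qed.
Lemma zK_mul (K : fieldType) a b : zK K (Z.mul a b) = zK K a * zK K b.
Proof. by rewrite /zK (rmorphM int_of_Z a b) intrM. Qed.
Lemma zK0 (K : fieldType) : zK K 0%Z = 0.
Proof. by []. Qed.
Lemma zK1 (K : fieldType) : zK K 1%Z = 1.
Proof. by []. Qed.
Lemma zKN1 (K : fieldType) : zK K (-1)%Z = -1.
Proof. by rewrite /zK /= NegzE. Qed.

Lemma coefZ_cat u v l : coefZ (u ++ v) l = Z.add (coefZ u l) (coefZ v l).
Proof. by elim: u => [|p u IH] //=; case: N.eqb; rewrite IH ?Z.add_assoc. Qed.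
Lemma coefZ_sc c u l : coefZ (scZ c u) l = Z.mul c (coefZ u l).
Proof. elim: u => [|p u IH] /=; first by rewrite Z.mul_0_r. by case: N.eqb; rewrite IH; lia. Qed.
Lemma coefZ_ins m c u l :
  coefZ (insZ m c u) l = Z.add (if N.eqb m l then c else 0%Z) (coefZ u l).
Proof.
elim: u => [|p u IH] /=; first by case: N.eqb.
case E1: (N.eqb m p.1) => /=.
  move/N.eqb_eq: E1 => <-; case: N.eqb; lia.
case E2: (N.ltb m p.1) => /=; first by case: (N.eqb m l); case: (N.eqb p.1 l); lia.
rewrite IH; case: (N.eqb m l); case: (N.eqb p.1 l); lia.
Qed.
Lemma coefZ_norm u l : coefZ (normZ u) l = coefZ u l.
Proof.
rewrite /normZ.
have -> : forall w, coefZ [seq p <- w | ~~ Z.eqb p.2 0] l = coefZ w l.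
  elim=> [|p w IH] //=; case E: (Z.eqb p.2 0) => /=.
    by move/Z.eqb_eq: E => ->; rewrite IH; case: N.eqb.
  by rewrite IH.
elim: u => [|p u IH] //=.
by rewrite coefZ_ins IH; case: N.eqb.
Qed.

Lemma mulZ0_nill v : mulZ0 [::] v = [::].
Proof. by []. Qed.
Lemma mulZ0_nilr u : mulZ0 u [::] = [::].
Proof. by elim: u. Qed.
Lemma mulZ_nill v : mulZ [::] v = [::].
Proof. by []. Qed.
Lemma mulZ_nilr u : mulZ u [::] = [::].
Proof. by rewrite /mulZ mulZ0_nilr. Qed.
Lemma mulZ_eZ i j : nilp (Tij i j) -> mulZ (eZ i) (eZ j) = [::].
Proof. by move/nilP; rewrite /mulZ /mulZ0 /= => ->. Qed.

Lemma lsymZ_nil i j k : idok i j k -> lsymZ (eZ i) (eZ j) (eZ k) = [::].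
Proof.
case/andP=> + _.
case: ifP => [/andP[/andP[/andP[h1 h2] h3] h4] _|_ /nilP //].
by rewrite /lsymZ (mulZ_eZ h1) (mulZ_eZ h2) (mulZ_eZ h3) (mulZ_eZ h4) !mulZ_nilr.
Qed.
Lemma B1Z_nil i j k : idok i j k -> B1Z (eZ i) (eZ j) (eZ k) = [::].
Proof.
case/andP=> _.
case: ifP => [/andP[/andP[/andP[/andP[/andP[h1 h2] h3] h4] h5] h6] _|_ /nilP //].
by rewrite /B1Z (mulZ_eZ h1) (mulZ_eZ h2) (mulZ_eZ h3) (mulZ_eZ h4) (mulZ_eZ h5) (mulZ_eZ h6).
Qed.

Definition V (K : fieldType) := {ffun 'I_nB -> K}.
Definition vsc (K : fieldType) (c : K) (u : V K) : V K := [ffun l => c * u l].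
Definition embZ (K : fieldType) (u : zv) : V K := [ffun l : 'I_nB => zK K (coefZ u (N.of_nat l))].
Definition mulB (K : fieldType) (u v : V K) : V K :=
  \sum_(i < nB) \sum_(j < nB) vsc (u i * v j) (embZ K (Tij (N.of_nat i) (N.of_nat j))).

Lemma embZ_cat (K : fieldType) u v : embZ K (u ++ v) = embZ K u + embZ K v.
Proof. by apply/ffunP=> l; rewrite !ffunE coefZ_cat zK_add. Qed.
Lemma embZ_addZ (K : fieldType) u v : embZ K (addZ u v) = embZ K u + embZ K v.
Proof. by rewrite -embZ_cat; apply/ffunP=> l; rewrite !ffunE /addZ coefZ_norm. Qed.
Lemma embZ_sc (K : fieldType) c u : embZ K (scZ c u) = vsc (zK K c) (embZ K u).
Proof. by apply/ffunP=> l; rewrite !ffunE coefZ_sc zK_mul. Qed.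
Lemma embZ_nil (K : fieldType) : embZ K [::] = 0.
Proof. by apply/ffunP=> l; rewrite !ffunE. Qed.

Lemma NeqbE a b : N.eqb (N.of_nat a) (N.of_nat b) = (a == b).
Proof. by apply/idP/eqP => [/N.eqb_eq/Nat2N.inj|->] //; apply/N.eqb_eq. Qed.

Lemma sum_single (K : fieldType) (m : N) (a : K) (G : N -> K) :
  \sum_(i < nB) (if N.eqb m (N.of_nat i) then a * G (N.of_nat i) else 0) =
  if N.ltb m nBN then a * G m else 0.
Proof.
case h: (N.ltb m nBN).
  have hm : (N.to_nat m < nB)%N.
    by apply/ltP; move/N.ltb_lt: h; rewrite /nBN; lia.
  rewrite (bigD1 (Ordinal hm)) //= N2Nat.id N.eqb_refl big1 ?addr0 // => i /eqP hi.
  case E: (N.eqb m (N.of_nat i)) => //; exfalso; apply: hi.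
  by apply: val_inj => /=; move/N.eqb_eq: E => ->; rewrite Nat2N.id.
rewrite big1 // => i _; case E: (N.eqb m (N.of_nat i)) => //.
move/N.eqb_eq: E h => ->; rewrite /nBN => /N.ltb_ge; have := ltn_ord i => /ltP; lia.
Qed.

Lemma sum_zv (K : fieldType) (x : zv) (G : N -> K) :
  (forall i, N.ltb i nBN = false -> G i = 0) \/ all (fun p => N.ltb p.1 nBN) x ->
  \sum_(p <- x) zK K p.2 * G p.1 =
  \sum_(i < nB) zK K (coefZ x (N.of_nat i)) * G (N.of_nat i).
Proof.
move=> H; elim: x H => [|p x IH] H.
  by rewrite big_nil big1 // => i _; rewrite zK0 mul0r.
rewrite big_cons IH; last by case: H => [|/andP[]]; [left|right].
have -> : \sum_(i < nB) zK K (coefZ (p :: x) (N.of_nat i)) * G (N.of_nat i) =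
   \sum_(i < nB) (if N.eqb p.1 (N.of_nat i) then zK K p.2 * G (N.of_nat i) else 0) +
   \sum_(i < nB) zK K (coefZ x (N.of_nat i)) * G (N.of_nat i).
  rewrite -big_split; apply: eq_bigr => i _ /=.
  by case: N.eqb; rewrite ?zK_add ?mulrDl ?add0r.
rewrite sum_single; congr (_ + _).
case h: (N.ltb p.1 nBN) => //.
case: H => [H|/andP[]]; last by rewrite h.
by rewrite H // mulr0.
Qed.

Lemma zK_coef_mulZ0 (K : fieldType) u v l :
  zK K (coefZ (mulZ0 u v) l) =
  \sum_(p <- u) \sum_(r <- v) zK K p.2 * zK K r.2 * zK K (coefZ (Tij p.1 r.1) l).
Proof.
elim: u => [|p u IH]; first by rewrite big_nil.
rewrite big_cons -IH /mulZ0 /= flatten_cat coefZ_cat zK_add; congr (_ + _).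
clear IH; elim: v => [|r v IHv]; first by rewrite big_nil.
rewrite big_cons -IHv /= coefZ_cat zK_add; congr (_ + _).
have -> : [seq (q.1, Z.mul (Z.mul p.2 r.2) q.2) | q <- Tij p.1 r.1] = scZ (Z.mul p.2 r.2) (Tij p.1 r.1) by [].
by rewrite coefZ_sc !zK_mul.
Qed.

Lemma Tij_out1 i j : N.ltb i nBN = false -> Tij i j = [::].
Proof. by rewrite /Tij => ->. Qed.
Lemma Tij_out2 i j : N.ltb j nBN = false -> Tij i j = [::].
Proof. by rewrite /Tij => ->; rewrite andbF. Qed.

Lemma mulB_emb (K : fieldType) x y : mulB (embZ K x) (embZ K y) = embZ K (mulZ x y).
Proof.
apply/ffunP=> l; rewrite /mulB sum_ffunE [RHS]ffunE /mulZ coefZ_norm zK_coef_mulZ0.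
under eq_bigr do rewrite sum_ffunE.
transitivity (\sum_(p <- x) zK K p.2 *
   (\sum_(r <- y) zK K r.2 * zK K (coefZ (Tij p.1 r.1) (N.of_nat l)))); last first.
  by apply: eq_bigr => p _; rewrite mulr_sumr; apply: eq_bigr => r _; rewrite mulrA.
rewrite (sum_zv (G := fun i => \sum_(r <- y) zK K r.2 * zK K (coefZ (Tij i r.1) (N.of_nat l)))); last first.
  left=> i hi; rewrite big1 // => r _; by rewrite Tij_out1 //= zK0 mulr0.
apply: eq_bigr => i _; under eq_bigr do rewrite !ffunE.
rewrite (sum_zv (G := fun j => zK K (coefZ (Tij (N.of_nat i) j) (N.of_nat l)))); last first.
  left=> j hj; by rewrite Tij_out2.
rewrite mulr_sumr; apply: eq_bigr => j _.
by rewrite mulrA.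
Qed.
Lemma mulBDl (K : fieldType) (u u' v : V K) : mulB (u + u') v = mulB u v + mulB u' v.
Proof.
rewrite /mulB -big_split; apply: eq_bigr => i _; rewrite -big_split; apply: eq_bigr => j _.
by apply/ffunP=> l; rewrite !ffunE; ring.
Qed.
Lemma mulBDr (K : fieldType) (u v v' : V K) : mulB u (v + v') = mulB u v + mulB u v'.
Proof.
rewrite /mulB -big_split; apply: eq_bigr => i _; rewrite -big_split; apply: eq_bigr => j _.
by apply/ffunP=> l; rewrite !ffunE; ring.
Qed.
Lemma mulBZl (K : fieldType) c (u v : V K) : mulB (vsc c u) v = vsc c (mulB u v).
Proof.
apply/ffunP=> l; rewrite /mulB ffunE !sum_ffunE mulr_sumr; apply: eq_bigr => i _.
rewrite !sum_ffunE mulr_sumr; apply: eq_bigr => j _; rewrite !ffunE; ring.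
Qed.
Lemma mulBZr (K : fieldType) c (u v : V K) : mulB u (vsc c v) = vsc c (mulB u v).
Proof.
apply/ffunP=> l; rewrite /mulB ffunE !sum_ffunE mulr_sumr; apply: eq_bigr => i _.
rewrite !sum_ffunE mulr_sumr; apply: eq_bigr => j _; rewrite !ffunE; ring.
Qed.
Lemma mulB0l (K : fieldType) (v : V K) : mulB 0 v = 0.
Proof.
by rewrite /mulB big1 // => i _; rewrite big1 // => j _; apply/ffunP=> l; rewrite !ffunE mul0r mul0r.
Qed.
Lemma mulB0r (K : fieldType) (u : V K) : mulB u 0 = 0.
Proof.
by rewrite /mulB big1 // => i _; rewrite big1 // => j _; apply/ffunP=> l; rewrite !ffunE mulr0 mul0r.
Qed.

Definition eb (K : fieldType) (i : 'I_nB) : V K := embZ K (eZ (N.of_nat i)).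

Lemma decompV (K : fieldType) (u : V K) : u = \sum_(i < nB) vsc (u i) (eb K i).
Proof.
apply/ffunP=> l; rewrite sum_ffunE (bigD1 l) //= big1 ?addr0.
  by rewrite !ffunE /= N.eqb_refl zK1 mulr1.
move=> i /negbTE hi; rewrite !ffunE /= NeqbE.
have -> : (nat_of_ord i == nat_of_ord l) = false by apply/negbTE; rewrite -(inj_eq val_inj) /= in hi; rewrite hi.
by rewrite zK0 mulr0.
Qed.

Lemma lin_zero (K : fieldType) (G : V K -> V K) :
  (forall x y, G (x + y) = G x + G y) -> (forall c x, G (vsc c x) = vsc c (G x)) ->
  (forall i, G (eb K i) = 0) -> forall u, G u = 0.
Proof.
move=> hD hZ hb u.
have G0 : G 0 = 0.
  have e : vsc 0 (0 : V K) = 0 by apply/ffunP=> l; rewrite !ffunE mul0r.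
  transitivity (G (vsc 0 0)); first by rewrite e.
  by rewrite hZ; apply/ffunP=> l; rewrite !ffunE mul0r.
rewrite (decompV u) (big_morph G hD G0) big1 // => i _.
by rewrite hZ hb; apply/ffunP=> l; rewrite !ffunE mulr0.
Qed.

Definition lsymB (K : fieldType) (u v z : V K) : V K :=
  mulB (mulB u v) z - mulB u (mulB v z) - mulB (mulB v u) z + mulB v (mulB u z).
Definition B1B (K : fieldType) (a b c : V K) : V K :=
  mulB (mulB a b) c - mulB (mulB b a) c - mulB (mulB a c) b + mulB (mulB c a) b
  + mulB (mulB b c) a - mulB (mulB c b) a.

Lemma vscN1 (K : fieldType) (x : V K) : vsc (-1) x = - x.
Proof. by apply/ffunP=> l; rewrite !ffunE mulN1r. Qed.

Lemma lsymB_emb (K : fieldType) a b c :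
  lsymB (embZ K a) (embZ K b) (embZ K c) = embZ K (lsymZ a b c).
Proof.
rewrite /lsymZ !embZ_addZ !embZ_sc -!mulB_emb zKN1 !vscN1 /lsymB.
by rewrite !addrA.
Qed.
Lemma B1B_emb (K : fieldType) a b c :
  B1B (embZ K a) (embZ K b) (embZ K c) = embZ K (B1Z a b c).
Proof.
rewrite /B1Z !embZ_addZ !embZ_sc -!mulB_emb zKN1 !vscN1 /B1B.
by rewrite !addrA.
Qed.

Lemma idok_ord (i j k : 'I_nB) : idok (N.of_nat i) (N.of_nat j) (N.of_nat k).
Proof.
have := idcheck_ok; rewrite /idcheck.
have mem : forall x : 'I_nB, N.of_nat x \in idxN.
  by move=> x; apply/mapP; exists (nat_of_ord x) => //; rewrite mem_iota add0n ltn_ord.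
move/allP/(_ _ (mem i))/allP/(_ _ (mem j))/allP/(_ _ (mem k)).
done.
Qed.

Ltac pw := apply/ffunP=> l; rewrite !ffunE; ring.

Lemma lsymB0 (K : fieldType) (u v z : V K) : lsymB u v z = 0.
Proof.
have h1 : forall i j z, lsymB (eb K i) (eb K j) z = 0.
  move=> i j; apply: lin_zero.
  - by move=> x y; rewrite /lsymB !(mulBDl, mulBDr); pw.
  - by move=> c x; rewrite /lsymB !(mulBZl, mulBZr); pw.
  by move=> k; rewrite /eb lsymB_emb lsymZ_nil ?embZ_nil // idok_ord.
have h2 : forall i v z, lsymB (eb K i) v z = 0.
  move=> i v' z'; apply: (lin_zero (G := fun v => lsymB (eb K i) v z')).
  - by move=> x y; rewrite /lsymB !(mulBDl, mulBDr); pw.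
  - by move=> c x; rewrite /lsymB !(mulBZl, mulBZr); pw.
  by move=> j; apply: h1.
apply: (lin_zero (G := fun u => lsymB u v z)).
- by move=> x y; rewrite /lsymB !(mulBDl, mulBDr); pw.
- by move=> c x; rewrite /lsymB !(mulBZl, mulBZr); pw.
by move=> i; apply: h2.
Qed.

Lemma B1B0 (K : fieldType) (u v z : V K) : B1B u v z = 0.
Proof.
have h1 : forall i j z, B1B (eb K i) (eb K j) z = 0.
  move=> i j; apply: lin_zero.
  - by move=> x y; rewrite /B1B !(mulBDl, mulBDr); pw.
  - by move=> c x; rewrite /B1B !(mulBZl, mulBZr); pw.
  by move=> k; rewrite /eb B1B_emb B1Z_nil ?embZ_nil // idok_ord.
have h2 : forall i v z, B1B (eb K i) v z = 0.
  move=> i v' z'; apply: (lin_zero (G := fun v => B1B (eb K i) v z')).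
  - by move=> x y; rewrite /B1B !(mulBDl, mulBDr); pw.
  - by move=> c x; rewrite /B1B !(mulBZl, mulBZr); pw.
  by move=> j; apply: h1.
apply: (lin_zero (G := fun u => B1B u v z)).
- by move=> x y; rewrite /B1B !(mulBDl, mulBDr); pw.
- by move=> c x; rewrite /B1B !(mulBZl, mulBZr); pw.
by move=> i; apply: h2.
Qed.
Fixpoint mevalB (K : fieldType) (w : nat -> V K) (t : term) : V K :=
  match t with Var n => w n | Mul a b => mulB (mevalB w a) (mevalB w b) end.
Definition evalB (K : fieldType) (w : nat -> V K) (f : napoly K) : V K :=
  \sum_(p <- f) vsc p.1 (mevalB w p.2).

Lemma vsc1 (K : fieldType) (x : V K) : vsc 1 x = x.
Proof. by apply/ffunP=> l; rewrite !ffunE mul1r. Qed.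
Lemma vscA (K : fieldType) a b (x : V K) : vsc a (vsc b x) = vsc (a * b) x.
Proof. by apply/ffunP=> l; rewrite !ffunE mulrA. Qed.
Lemma vsc_sumr (K : fieldType) (I : Type) (r : seq I) (F : I -> V K) c :
  vsc c (\sum_(i <- r) F i) = \sum_(i <- r) vsc c (F i).
Proof. by apply/ffunP=> l; rewrite ffunE !sum_ffunE mulr_sumr; apply: eq_bigr => i _; rewrite ffunE. Qed.
Lemma mulB_suml (K : fieldType) (I : Type) (r : seq I) (F : I -> V K) v :
  mulB (\sum_(i <- r) F i) v = \sum_(i <- r) mulB (F i) v.
Proof. exact: (big_morph (fun u => mulB u v) (fun x y => mulBDl x y v) (mulB0l v)). Qed.
Lemma mulB_sumr (K : fieldType) (I : Type) (r : seq I) (F : I -> V K) u :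
  mulB u (\sum_(i <- r) F i) = \sum_(i <- r) mulB u (F i).
Proof. exact: (big_morph (fun v => mulB u v) (fun x y => mulBDr u x y) (mulB0r u)). Qed.

Lemma evalB_cat (K : fieldType) w (f g : napoly K) : evalB w (f ++ g) = evalB w f + evalB w g.
Proof. by rewrite /evalB big_cat. Qed.
Lemma evalB_scale (K : fieldType) w c (f : napoly K) : evalB w (pscale c f) = vsc c (evalB w f).
Proof. by rewrite /evalB /pscale big_map vsc_sumr; apply: eq_bigr => p _; rewrite vscA. Qed.
Lemma evalB_mul (K : fieldType) w (f g : napoly K) :
  evalB w (pmul f g) = mulB (evalB w f) (evalB w g).
Proof.
rewrite /evalB /pmul big_allpairs_dep mulB_suml; apply: eq_bigr => p _.
rewrite mulBZl mulB_sumr vsc_sumr; apply: eq_bigr => q _.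
by rewrite mulBZr vscA.
Qed.
Lemma evalB_flat (K : fieldType) w (f : napoly K) (h : term -> napoly K) :
  evalB w (flatten [seq pscale p.1 (h p.2) | p <- f]) = \sum_(p <- f) vsc p.1 (evalB w (h p.2)).
Proof.
elim: f => [|p f IH]; first by rewrite /evalB !big_nil.
by rewrite /= evalB_cat IH evalB_scale big_cons.
Qed.
Lemma mevalB_subst (K : fieldType) w sg t :
  evalB w (msubst sg t) = mevalB (fun n => evalB w (sg n)) t :> V K.
Proof. by elim: t => [n|a IHa b IHb] //=; rewrite evalB_mul IHa IHb. Qed.
Lemma evalB_subst (K : fieldType) w sg (f : napoly K) :
  evalB w (psubst sg f) = evalB (fun n => evalB w (sg n)) f.
Proof. by rewrite /psubst evalB_flat; apply: eq_bigr => p _; rewrite mevalB_subst. Qed.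

Lemma evalB_coef (K : fieldType) w (f : napoly K) (S : seq term) :
  uniq S -> {subset map snd f <= S} ->
  evalB w f = \sum_(t <- S) vsc (coef f t) (mevalB w t).
Proof.
move=> uS; elim: f => [|p f IH] sub.
  rewrite /evalB big_nil big1 // => t _; rewrite coef_nil.
  by apply/ffunP=> l; rewrite !ffunE mul0r.
have pS : p.2 \in S by apply: sub; rewrite inE eqxx.
rewrite /evalB big_cons -/(evalB w f) IH; last by move=> x hx; apply: sub; rewrite inE hx orbT.
have -> : \sum_(t <- S) vsc (coef (p :: f) t) (mevalB w t) =
   \sum_(t <- S) vsc (if p.2 == t then p.1 else 0) (mevalB w t) +
   \sum_(t <- S) vsc (coef f t) (mevalB w t).
  rewrite -big_split; apply: eq_bigr => t _; rewrite coef_cons.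
  by apply/ffunP=> l; rewrite !ffunE mulrDl.
congr (_ + _); rewrite (big_rem _ pS) /= eqxx big1_seq ?addr0 // => t /andP[_ ht].
have -> : (p.2 == t) = false.
  by apply/negbTE; move: ht; rewrite mem_rem_uniq // inE => /andP[ht _]; rewrite eq_sym.
by apply/ffunP=> l; rewrite !ffunE mul0r.
Qed.
Lemma evalB_peq (K : fieldType) w (f g : napoly K) : peq f g -> evalB w f = evalB w g.
Proof.
move=> e; set S := undup (map snd (f ++ g)).
have uS : uniq S by apply: undup_uniq.
rewrite (evalB_coef w uS) ?(evalB_coef w (f:=g) uS); first by apply: eq_bigr => t _; rewrite e.
- by move=> x hx; rewrite mem_undup map_cat mem_cat hx orbT.
- by move=> x hx; rewrite mem_undup map_cat mem_cat hx.
Qed.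

Lemma Tideal_sound (K : fieldType) (g : napoly K) :
  Tideal [:: lsym_id K; B1_id K] g -> forall w, evalB w g = 0.
Proof.
elim=> {g}.
- move=> g; rewrite !inE => /orP[] /eqP -> w.
    rewrite /evalB /lsym_id !big_cons big_nil /=.
    rewrite !vsc1 !vscN1 addr0 !addrA; exact: lsymB0.
  rewrite /evalB /B1_id !big_cons big_nil /=.
  rewrite !vsc1 !vscN1 addr0 !addrA; exact: B1B0.
- by move=> w; rewrite /evalB big_nil.
- by move=> f g _ IH e w; rewrite -(evalB_peq w e) IH.
- by move=> f g _ IHf _ IHg w; rewrite /padd evalB_cat IHf IHg addr0.
- by move=> c f _ IH w; rewrite evalB_scale IH; apply/ffunP=> l; rewrite !ffunE mulr0.
- by move=> h f _ IH w; rewrite evalB_mul IH mulB0r.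
- by move=> h f _ IH w; rewrite evalB_mul IH mulB0l.
- by move=> sg f _ IH w; rewrite evalB_subst IH.
Qed.
Fixpoint antiB (K : fieldType) (w : nat -> V K) (t : term) : V K :=
  match t with
  | Var n => w n
  | Mul a b => let x := antiB w a in let y := antiB w b in mulB x y + mulB y x
  end.

Lemma evalB_anti (K : fieldType) w t : evalB w (meval_anti (pvar K) t) = antiB w t.
Proof.
elim: t => [n|a IHa b IHb] /=.
  by rewrite /evalB /pvar big_cons big_nil /= vsc1 addr0.
by rewrite /panti /padd evalB_cat !evalB_mul IHa IHb.
Qed.
Lemma evalB_peval (K : fieldType) w (f : napoly K) :
  evalB w (peval_anti (pvar K) f) = \sum_(p <- f) vsc p.1 (antiB w p.2).
Proof. by rewrite /peval_anti evalB_flat; apply: eq_bigr => p _; rewrite evalB_anti. Qed.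

Lemma antiB_tmap (K : fieldType) (w : nat -> V K) r t :
  antiB w (tmap r t) = antiB (fun i => w (r i)) t.
Proof. by elim: t => [n|a IHa b IHb] //=; rewrite IHa IHb. Qed.
Lemma antiB_emb (K : fieldType) (W : nat -> zv) t :
  antiB (fun q => embZ K (W q)) t = embZ K (antiZ W t).
Proof. by elim: t => [n|a IHa b IHb] //=; rewrite IHa IHb embZ_addZ !mulB_emb. Qed.
Lemma antiB_zero (K : fieldType) (w : nat -> V K) t i :
  i \in leaves t -> w i = 0 -> antiB w t = 0.
Proof.
move=> + wi; elim: t => [n|a IHa b IHb] /=; first by rewrite inE => /eqP <-.
rewrite mem_cat => /orP[/IHa|/IHb] ->; by rewrite mulB0l mulB0r addr0.
Qed.

Lemma eqcb_leaves t s x : eqcb t s -> x \in leaves t -> x \in leaves s.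
Proof.
elim: t s => [m|a IHa b IHb] [n|c d] //=.
  by move/eqP->.
rewrite !mem_cat => /orP[/andP[h1 h2]|/andP[h1 h2]] /orP[hx|hx].
- by rewrite (IHa _ h1 hx).
- by rewrite (IHb _ h2 hx) orbT.
- by rewrite (IHa _ h1 hx) orbT.
- by rewrite (IHb _ h2 hx).
Qed.

Lemma eqcb_tmap r t s :
  (forall x y, x \in leaves t -> y \in leaves s -> (r x == r y) = (x == y)) ->
  eqcb (tmap r t) (tmap r s) = eqcb t s.
Proof.
elim: t s => [m|a IHa b IHb] [n|c d] //= H.
  by apply: H; rewrite inE.
rewrite (IHa c) ?(IHb d) ?(IHa d) ?(IHb c) //; move=> x y hx hy; apply: H;
  by rewrite /= mem_cat ?hx ?hy ?orbT.
Qed.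

Lemma leaves_tmap r t : leaves (tmap r t) = map r (leaves t).
Proof. by elim: t => [n|a IHa b IHb] //=; rewrite IHa IHb map_cat. Qed.
Lemma deg_leaves t : deg t = size (leaves t).
Proof. by elim: t => [n|a IHa b IHb] //=; rewrite IHa IHb size_cat. Qed.
Lemma deg_pos t : (0 < deg t)%N.
Proof. by elim: t => [n|a IHa b IHb] //=; rewrite addn_gt0 IHa. Qed.

Lemma mem_trees labs t : (deg t <= 4)%N -> {subset leaves t <= labs} -> t \in treesU labs.
Proof.
have T1 : forall t, deg t = 1%N -> {subset leaves t <= labs} -> t \in trees1 labs.
  case=> [n|a b] /=; last by have := deg_pos a; have := deg_pos b; lia.
  by move=> _ h; apply: map_f; apply: h; rewrite inE.
have sl : forall a b, {subset leaves (Mul a b) <= labs} ->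
    {subset leaves a <= labs} /\ {subset leaves b <= labs}.
  by move=> a b h; split=> x hx; apply: h; rewrite /= mem_cat hx ?orbT.
have T2 : forall t, deg t = 2%N -> {subset leaves t <= labs} -> t \in trees2 labs.
  case=> [n|a b] //= hd /sl[ha hb].
  have := deg_pos a; have := deg_pos b => pa pb.
  have da : deg a = 1%N by lia. have db : deg b = 1%N by lia.
  exact: (allpairs_f Mul (T1 a da ha) (T1 b db hb)).
have T3 : forall t, deg t = 3%N -> {subset leaves t <= labs} -> t \in trees3 labs.
  case=> [n|a b] //= hd /sl[ha hb].
  have := deg_pos a; have := deg_pos b => pa pb.
  rewrite mem_cat; have [da|da] : deg a = 1%N \/ deg a = 2%N by lia.
    have db : deg b = 2%N by lia.
    by rewrite (allpairs_f Mul (T1 a da ha) (T2 b db hb)).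
  have db : deg b = 1%N by lia.
  by rewrite (allpairs_f Mul (T2 a da ha) (T1 b db hb)) orbT.
have T4 : forall t, deg t = 4%N -> {subset leaves t <= labs} -> t \in trees4 labs.
  case=> [n|a b] //= hd /sl[ha hb].
  have := deg_pos a; have := deg_pos b => pa pb.
  rewrite !mem_cat; have [da|[da|da]] : deg a = 1%N \/ deg a = 2%N \/ deg a = 3%N by lia.
  - have db : deg b = 3%N by lia.
    by rewrite (allpairs_f Mul (T1 a da ha) (T3 b db hb)).
  - have db : deg b = 2%N by lia.
    by rewrite (allpairs_f Mul (T2 a da ha) (T2 b db hb)) orbT.
  - have db : deg b = 1%N by lia.
    by rewrite (allpairs_f Mul (T3 a da ha) (T1 b db hb)) !orbT.
move=> hd hl; rewrite /treesU; have := deg_pos t => pt.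
have [d|[d|[d|d]]] : deg t = 1%N \/ deg t = 2%N \/ deg t = 3%N \/ deg t = 4%N by lia.
- by rewrite mem_cat (T1 t d hl).
- by rewrite mem_cat; apply/orP; right; rewrite mem_cat (T2 t d hl).
- by rewrite mem_cat; apply/orP; right; rewrite mem_cat; apply/orP; right; rewrite mem_cat (T3 t d hl).
- by rewrite mem_cat; apply/orP; right; rewrite mem_cat; apply/orP; right; rewrite mem_cat (T4 t d hl) orbT.
Qed.

Lemma index_map_in (f : nat -> nat) (L : seq nat) x :
  {in L &, injective f} -> x \in L -> index (f x) (map f L) = index x L.
Proof.
elim: L => [|y L IH] //= inj; rewrite inE => /orP[/eqP->|hx].
  by rewrite !eqxx.
case: (y =P x) => [->|nyx]; first by rewrite !eqxx.
have -> : (f y == f x) = false.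
  apply/negbTE/eqP => e; apply: nyx; apply: inj e; rewrite inE ?eqxx ?hx ?orbT //.
by rewrite IH // => a b ha hb; apply: inj; rewrite inE ?ha ?hb orbT.
Qed.

Lemma zK_dot (K : fieldType) phi x :
  zK K (dotZ phi x) = \sum_(p <- phi) zK K p.2 * zK K (coefZ x p.1).
Proof. by elim: phi => [|p phi IH] /=; rewrite ?big_nil ?big_cons ?zK_add ?zK_mul ?IH. Qed.

Lemma zK_neq0 (K : fieldType) (hK : [pchar K]%R =i pred0) z : Z.eqb z 0 = false -> zK K z != 0.
Proof.
move=> hz; rewrite /zK.
have : int_of_Z z != 0.
  apply/eqP => e; move: hz; have -> : z = Z_of_int (int_of_Z z) by rewrite int_of_ZK.
  by rewrite e.
case: (int_of_Z z) => n /=.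
  by rewrite (pcharf0P _).1 // => /negbTE ->.
by move=> _; rewrite NegzE mulrNz oppr_eq0 (pcharf0P _).1.
Qed.
Definition phiK (K : fieldType) (phi : zv) (u : V K) : K :=
  \sum_(l < nB) zK K (coefZ phi (N.of_nat l)) * u l.

Lemma phiK_emb (K : fieldType) phi x :
  all (fun p => N.ltb p.1 nBN) phi -> phiK phi (embZ K x) = zK K (dotZ phi x).
Proof.
move=> hphi; rewrite zK_dot (sum_zv (G := fun i => zK K (coefZ x i))); last by right.
by apply: eq_bigr => l _; rewrite ffunE.
Qed.
Lemma phiK_sum (K : fieldType) phi (f : napoly K) (F : K * term -> V K) :
  phiK phi (\sum_(p <- f) vsc p.1 (F p)) = \sum_(p <- f) p.1 * phiK phi (F p).
Proof.
rewrite /phiK; under eq_bigr do rewrite sum_ffunE mulr_sumr.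
rewrite exchange_big /=; apply: eq_bigr => p _; rewrite mulr_sumr.
by apply: eq_bigr => l _; rewrite ffunE; ring.
Qed.
Lemma phiK0 (K : fieldType) phi : phiK phi (0 : V K) = 0.
Proof. by rewrite /phiK big1 // => l _; rewrite ffunE mulr0. Qed.

Lemma detector (K : fieldType) (hK : [pchar K]%R =i pred0) (s : term) :
  (deg s <= 4)%N ->
  exists (w : nat -> V K) (phi : zv) (k : K), k != 0 /\
    forall t, (deg t <= 4)%N -> phiK phi (antiB w t) = k * (if eqcb t s then 1 else 0).
Proof.
move=> ds.
set L := leaves s; set rho := fun i => index i L; set s2 := tmap rho s.
have Ls2 : leaves s2 = map rho L by rewrite /s2 leaves_tmap.
have szL : size L = deg s by rewrite deg_leaves.
have rho_inj : forall x y, x \in L -> y \in L -> (rho x == rho y) = (x == y).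
  move=> x y hx hy; apply/eqP/eqP => [e|->] //.
  move: e; rewrite /rho => e.
  by rewrite -(nth_index 0 hx) -(nth_index 0 hy) e.
have ds2 : deg s2 = deg s by rewrite !deg_leaves Ls2 size_map.
have s2in : s2 \in treesU (iota 0 4).
  apply: mem_trees; first by rewrite ds2.
  move=> x; rewrite Ls2 => /mapP[y hy ->]; rewrite mem_iota add0n /rho.
  by apply: leq_trans (_ : size L <= 4)%N; rewrite ?index_mem // szL.
have s2n : normalized s2.
  rewrite /normalized Ls2; apply/eqP; rewrite -map_comp; apply/eq_in_map => y hy /=.
  by rewrite index_map_in // => a b ha hb /eqP; rewrite rho_inj // => /eqP.
have := allP detcheck_ok _ s2in; rewrite s2n /= /goodS.
set e := lookupD s2 dtab; case/andP=> /andP[kne phiok] tok.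
exists (fun i => embZ K (wZ s2 (rho i))), e.1, (zK K e.2); split; first by apply: zK_neq0 => //; exact: negbTE kne.
move=> t dt.
case: (boolP (all (fun i => i \in L) (leaves t))) => [hall|].
  have hall' : {subset leaves t <= L} by move=> x hx; exact: (allP hall x hx).
  rewrite -(antiB_tmap (fun q => embZ K (wZ s2 q))) antiB_emb phiK_emb //.
  have t2in : tmap rho t \in treesU (undup (leaves s2)).
    apply: mem_trees; first by rewrite !deg_leaves leaves_tmap size_map -deg_leaves.
    move=> x; rewrite leaves_tmap mem_undup Ls2 => /mapP[y hy ->].
    by apply: map_f; apply: hall'.
  move/allP: tok => /(_ _ t2in) /Z.eqb_eq ->.
  rewrite eqcb_tmap; last by move=> x y hx hy; apply: rho_inj => //; apply: hall'.
  by case: eqcb; rewrite ?mulr1 ?mulr0 ?zK0.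
case/allPn=> i0 hi0 ni0.
have -> : eqcb t s = false.
  by apply/negbTE/negP => /eqcb_leaves /(_ hi0); rewrite -/L (negbTE ni0).
rewrite mulr0 (@antiB_zero K _ t i0) ?phiK0 //.
have -> : rho i0 = size L by rewrite /rho memNindex.
rewrite /wZ.
have -> : [seq p <- iota 0 (size (leaves s2)) | nth 0 (leaves s2) p == size L] = [::].
  apply/eqP; rewrite -[_ == _]negbK -has_filter; apply/hasPn => p.
  rewrite mem_iota add0n Ls2 size_map => hp /=.
  rewrite (nth_map 0) // /rho; apply/eqP => e'.
  by have := index_mem (nth 0 L p) L; rewrite e' ltnn mem_nth.
by rewrite embZ_nil.
Qed.

Lemma main_aux (K : fieldType) (hK : [pchar K]%R =i pred0)
  (f : napoly K) (hdeg : all (fun p : K * term => (deg p.2 <= 4)%N) f) :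
  is_identity_LSB1_anti f -> conseq_comm f.
Proof.
move=> hid; apply: conseq_of_chi => p pf.
have ds : (deg p.2 <= 4)%N := allP hdeg p pf.
have [w [phi [k [kne Hk]]]] := detector hK ds.
have H0 := Tideal_sound (hid (pvar K)) w.
rewrite evalB_peval in H0.
have := congr1 (phiK phi) H0; rewrite phiK0 phiK_sum.
have -> : \sum_(q <- f) q.1 * phiK phi (antiB w q.2) = k * chi f p.2.
  rewrite /chi mulr_sumr [RHS]big_mkcond /=; apply: eq_big_seq => q hq.
  rewrite Hk; last exact: (allP hdeg q hq).
  by case: eqcb; rewrite ?mulr1 ?mulr0 // mulrC.
by move/eqP; rewrite mulf_eq0 (negbTE kne) /= => /eqP.
Qed.

Local Close Scope ring_scope.
Unset Implicit Arguments.

Theorem mainTheorem9 (K : fieldType) (hK : [pchar K]%R =i pred0)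
  (f : napoly K) (hdeg : all (fun p => deg p.2 <= 4) f) :
  is_identity_LSB1_anti f -> conseq_comm f.
Proof. exact: main_aux. Qed.
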